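(* Let $d\in\mathbb{N}$, $\mathbf{s}=(s_1,\dots,s_d)\in\mathbb{N}^d$ and $y\in(-\pi/2,\pi/2)$. Let $l_1(n)\in\{2n,2n+1,2n-1\}$ and $l_2(n),\dots,l_d(n)\in\{2n,2n+1\}$. Then for every integer $n\ge0$, \[ \sum_{n_1>\cdots>n_d>n}\frac{a_{n_1}(\sin y)}{l_1(n_1)^{s_1}\cdots l_d(n_d)^{s_d}}=\int_0^y\lambda_{l_1,s_1}\circ\cdots\circ\lambda_{l_d,s_d}\circ\overleftarrow{a_n(\sin t)} , \] and for every $x\in(-1,1)$, \[ \sum_{n_1>\cdots>n_d>n}\frac{a_{n_1}(x)}{l_1(n_1)^{s_1}\cdots l_d(n_d)^{s_d}}=\int_0^x\Lambda_{l_1,s_1}\circ\cdots\circ\Lambda_{l_d,s_d}\circ\overleftarrow{a_n(t)} , \] where $\Lambda_{l,s}$ is obtained from $\lambda_{l,s}$ by the substitution $t\to\sin^{-1}t$.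
   Context: $\mathbb{N}=\{1,2,\dots\}$. Set $a_0(x)=1$, $a_n(x)=\frac{1}{4^n}\binom{2n}{n}x^{2n}$ for $n\ge1$. Iterated integrals: $\int_0^y f_1(t)dt\circ\cdots\circ f_r(t)dt:=\int_{y>t_1>\cdots>t_r>0}f_1(t_1)\cdots f_r(t_r)dt_1\cdots dt_r$; juxtaposition of 1-forms means $\circ$; $(\omega)^k$ is $\omega$ repeated $k$ times ($k=0$: empty); expressions are expanded by linearity (e.g. $\omega\circ(\alpha-\beta\circ\gamma)=\omega\circ\alpha-\omega\circ\beta\circ\gamma$). $d(\sec t)=\sec t\tan t\,dt$. For a function $F$: $f_1(t)dt\circ\overleftarrow{F(t)}\circ f_2(t)dt:=F(t)f_1(t)dt\circ f_2(t)dt$ (and likewise when $\overleftarrow{F}$ stands at the end: it multiplies the preceding 1-form), while $\int_0^y\overleftarrow{F(t)}\circ f_1(t)dt\circ\cdots\circ f_r(t)dt:=F(y)\int_0^y f_1(t)dt\circ\cdots\circ f_r(t)dt$. With $F_s=(\cot t\,dt)^{s-1}$ define $\lambda_{2n,s}(t)=F_s\,(\tan t\,dt-\csc t\,dt\ d(\sec t))$, $\lambda_{2n+1,s}(t)=\overleftarrow{\csc t}\circ F_s\,(\sin t\tan t\,dt-dt\ d(\sec t))$, $\lambda_{2n-1,1}(t)=\overleftarrow{\cos t}\circ\tan t\sec t\,dt$, $\lambda_{2n-1,s}(t)=\overleftarrow{\sin t}\circ F_{s-1}\,\frac{dt}{\tan^2 t}\,\tan t\sec t\,dt$ for $s\ge2$.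 The substitution $t\to\sin^{-1}t$ replaces each function $F(t)$ by $F(\sin^{-1}t)$ and each 1-form $f(t)dt$ by $f(\sin^{-1}t)\,dt/\sqrt{1-t^2}$. *)

(* Defs.v *)
From Stdlib Require Import Reals List.
From Coquelicot Require Import Coquelicot.
Import ListNotations.
Open Scope R_scope.

Definition a_coef (n : nat) (x : R) : R :=
  match n with
  | O => 1
  | S _ => Binomial.C (2 * n) n / 4 ^ n * x ^ (2 * n)
  end.

Inductive Kind : Type := L2n | L2n1 | L2nm1.

Definition lval (k : Kind) (m : nat) : R :=
  match k with
  | L2n => 2 * INR m
  | L2n1 => 2 * INR m + 1
  | L2nm1 => 2 * INR m - 1
  end.

Fixpoint sum_between (f : nat -> R) (m N : nat) : R :=
  match N with
  | O => 0
  | S N' => sum_between f m N' + (if Nat.ltb m N' then f N' else 0)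
  end.

(* msum [w_1; ...; w_d] m N = sum_{N > n_1 > ... > n_d > m} w_1(n_1) ... w_d(n_d) *)
Fixpoint msum (ws : list (nat -> R)) (m N : nat) : R :=
  match ws with
  | [] => 1
  | w :: ws' => sum_between (fun k => w k * msum ws' m k) m N
  end.

Definition weights (x : R) (ks : list (Kind * nat)) : list (nat -> R) :=
  match ks with
  | [] => []
  | (k1, s1) :: rest =>
      (fun m => a_coef m x / lval k1 m ^ s1)
        :: map (fun p => fun m => 1 / lval (fst p) m ^ (snd p)) rest
  end.

Definition lhs_partial (x : R) (ks : list (Kind * nat)) (n N : nat) : R :=
  msum (weights x ks) n N.

(* Form f  is the 1-form f(t)dt ; Mul F  is  <-F(t) (overleftarrow) *)
Inductive letter : Type :=
  | Form (f : R -> R)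
  | Mul (F : R -> R).

Definition word := list letter.

(* Iterated integral with the paper's conventions:
   int_0^y f_1 dt o ... o f_r dt = int_0^y f_1(t_1) (int_0^{t_1} f_2 ... ) dt_1 ;
   a leading <-F multiplies by F(y); <-F after a 1-form multiplies that 1-form. *)
Fixpoint iint (w : word) (y : R) : R :=
  match w with
  | [] => 1
  | Mul F :: w' => F y * iint w' y
  | Form f :: w' => RInt (fun t => f t * iint w' t) 0 y
  end.

Definition lin := list (R * word).

Definition comp (A B : lin) : lin :=
  flat_map (fun cw => map (fun cw' => (fst cw * fst cw', snd cw ++ snd cw')) B) A.

Definition lin_iint (A : lin) (y : R) : R :=
  fold_right (fun cw acc => fst cw * iint (snd cw) y + acc) 0 A.

Definition cotf (t : R) : R := cos t / sin t.
Definition cscf (t : R) : R := 1 / sin t.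
Definition secf (t : R) : R := 1 / cos t.
Definition dsec (t : R) : R := secf t * tan t.          (* d(sec t) = sec t tan t dt *)
Definition tansec (t : R) : R := tan t * secf t.

Definition Fs (s : nat) : word := repeat (Form cotf) (s - 1).

Definition lam (k : Kind) (s : nat) : lin :=
  match k with
  | L2n =>
      [ (1, Fs s ++ [Form tan]);
        (-1, Fs s ++ [Form cscf; Form dsec]) ]
  | L2n1 =>
      [ (1, Mul cscf :: Fs s ++ [Form (fun t => sin t * tan t)]);
        (-1, Mul cscf :: Fs s ++ [Form (fun _ => 1); Form dsec]) ]
  | L2nm1 =>
      match s with
      | 1%nat => [ (1, [Mul cos; Form tansec]) ]
      | _ => [ (1, Mul sin :: Fs (s - 1) ++
                   [Form (fun t => 1 / tan t ^ 2); Form tansec]) ]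
      end
  end.

Definition lam_word (ks : list (Kind * nat)) : lin :=
  fold_right (fun p acc => comp (lam (fst p) (snd p)) acc) [(1, [])] ks.

Definition subst_letter (l : letter) : letter :=
  match l with
  | Form f => Form (fun t => f (asin t) / sqrt (1 - t ^ 2))
  | Mul F => Mul (fun t => F (asin t))
  end.

Definition subst_lin (A : lin) : lin :=
  map (fun cw => (fst cw, map subst_letter (snd cw))) A.

Definition rhs_sin (ks : list (Kind * nat)) (n : nat) (y : R) : R :=
  lin_iint (comp (lam_word ks) [(1, [Mul (fun t => a_coef n (sin t))])]) y.

Definition rhs_x (ks : list (Kind * nat)) (n : nat) (x : R) : R :=
  lin_iint (comp (subst_lin (lam_word ks)) [(1, [Mul (fun t => a_coef n t)])]) x.

(* Main.v *)
Require Import Defs.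
From Stdlib Require Import Reals List Lia Lra FunctionalExtensionality.
From Coquelicot Require Import Coquelicot.
Import ListNotations.
Open Scope R_scope.


Definition beta (k : nat) : R := Binomial.C (2 * k) k / 4 ^ k.

Lemma beta_0 : beta 0 = 1.
Proof. unfold beta, Binomial.C. simpl. field. Qed.

Lemma beta_S k : beta (S k) = beta k * (2 * INR k + 1) / (2 * INR k + 2).
Proof.
  unfold beta, Binomial.C.
  replace (2 * S k - S k)%nat with (S k) by lia.
  replace (2 * k - k)%nat with k by lia.
  replace (2 * S k)%nat with (S (S (2 * k))) by lia.
  rewrite !fact_simpl, !mult_INR.
  rewrite !S_INR, mult_INR. simpl (INR 2). simpl pow.
  assert (H1 := INR_fact_neq_0 k). assert (H2 := INR_fact_neq_0 (2*k)).
  assert (H3 := pos_INR k).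
  assert (4 ^ k <> 0) by (apply pow_nonzero; lra).
  field. repeat split; lra.
Qed.

Lemma beta_pos k : 0 < beta k.
Proof.
  induction k. rewrite beta_0; lra.
  rewrite beta_S. assert (H := pos_INR k).
  apply Rmult_lt_0_compat; [apply Rmult_lt_0_compat; lra| apply Rinv_0_lt_compat; lra].
Qed.

Lemma beta_le1 k : beta k <= 1.
Proof.
  induction k. rewrite beta_0; lra.
  rewrite beta_S. assert (H := pos_INR k). assert (H' := beta_pos k).
  unfold Rdiv. rewrite Rmult_assoc.
  assert ((2 * INR k + 1) * / (2 * INR k + 2) <= 1).
  { apply (Rmult_le_reg_r (2 * INR k + 2)). lra. rewrite Rmult_assoc, Rinv_l by lra. lra. }
  assert (0 <= (2 * INR k + 1) * / (2 * INR k + 2)).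
  { apply Rmult_le_pos; [lra|]. apply Rlt_le, Rinv_0_lt_compat; lra. }
  nra.
Qed.

Lemma a_coef_beta k x : a_coef k x = beta k * (x ^ 2) ^ k.
Proof.
  destruct k. simpl. rewrite beta_0. ring.
  unfold a_coef. rewrite <- pow_mult. unfold beta. reflexivity.
Qed.

Definition polyb (g : nat -> R) := exists M p, forall k, Rabs (g k) <= M * (INR k + 1) ^ p.

Lemma radius_poly_aux p : forall a M, (forall k, Rabs (a k) <= M * (INR k + 1) ^ p) ->
  Rbar_le 1 (CV_radius a).
Proof.
  induction p; intros a M H.
  - destruct (CV_radius_bounded a) as [Hub _]. apply Hub. exists M. intros n.
    rewrite pow1, Rmult_1_r. specialize (H n). simpl in H. lra.
  - assert (HM : 0 <= M).
    { specialize (H 0%nat). replace ((INR 0 + 1) ^ S p) with 1 in H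
        by (simpl; rewrite Rplus_0_l, pow1; ring). assert (0 <= Rabs (a 0%nat)) by apply Rabs_pos. nra. }
    set (e := fun k => match k with O => 0 | S j => a j / INR (S j) end).
    assert (Hd : forall k, PS_derive e k = a k).
    { intros k. unfold PS_derive, e. field. apply not_0_INR. lia. }
    rewrite <- (CV_radius_ext _ _ Hd), CV_radius_derive.
    apply (IHp e M). intros [|j]; [change (e 0%nat) with 0 | change (e (S j)) with (a j / INR (S j))].
    + rewrite Rabs_R0. apply Rmult_le_pos; auto. apply pow_le. assert (H0 := pos_INR 0). lra.
    + specialize (H j). rewrite S_INR. unfold Rdiv. rewrite Rabs_mult.
      assert (Hj := pos_INR j).
      rewrite Rabs_inv. rewrite (Rabs_pos_eq (INR j + 1)) by lra.
      simpl in H.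
      apply (Rmult_le_reg_r (INR j + 1)). lra.
      rewrite Rmult_assoc, Rinv_l by lra. rewrite Rmult_1_r.
      apply Rle_trans with (1 := H).
      assert ((INR j + 1) ^ p <= (INR j + 1 + 1) ^ p) by (apply pow_incr; lra).
      assert (0 <= M * (INR j + 1)) by (apply Rmult_le_pos; lra).
      replace (M * ((INR j + 1) * (INR j + 1) ^ p)) with ((M * (INR j + 1)) * (INR j + 1) ^ p) by ring.
      replace (M * (INR j + 1 + 1) ^ p * (INR j + 1)) with ((M * (INR j + 1)) * (INR j + 1 + 1) ^ p) by ring.
      apply Rmult_le_compat_l; auto.
Qed.

Lemma radius_poly g : polyb g -> Rbar_le 1 (CV_radius (fun k => g k * beta k)).
Proof.
  intros [M [p H]]. apply (radius_poly_aux p _ M). intros k.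
  rewrite Rabs_mult, (Rabs_pos_eq (beta k)) by (apply Rlt_le, beta_pos).
  assert (H1 := beta_le1 k). assert (H2 := beta_pos k). specialize (H k).
  assert (0 <= Rabs (g k)) by apply Rabs_pos.
  apply Rle_trans with (Rabs (g k)); [nra|exact H].
Qed.

Definition Iv (t : R) := - (PI / 2) < t < PI / 2.

Lemma Iv_cos t : Iv t -> 0 < cos t.
Proof. intros [H1 H2]. apply cos_gt_0; lra. Qed.

Lemma Iv_sin2 t : Iv t -> Rabs (sin t ^ 2) < 1.
Proof.
  intros H. assert (Hc := Iv_cos t H). assert (Hs := sin2_cos2 t). unfold Rsqr in Hs.
  rewrite Rabs_pos_eq by (apply pow2_ge_0). nra.
Qed.

Lemma Iv_0 : Iv 0.
Proof. unfold Iv. assert (H := PI_RGT_0). lra. Qed.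

Lemma Iv_sin_neq0 t : Iv t -> t <> 0 -> sin t <> 0.
Proof.
  intros [H1 H2] Ht Hs.
  destruct (Rlt_or_le 0 t).
  - assert (0 < sin t) by (apply sin_gt_0; lra). lra.
  - assert (sin t < 0) by (apply sin_lt_0_var; lra). lra.
Qed.

Definition Phi (g : nat -> R) (t : R) := PSeries (fun k => g k * beta k) (sin t ^ 2).
Definition DPhi (g : nat -> R) (t : R) := PSeries (PS_derive (fun k => g k * beta k)) (sin t ^ 2).

Lemma Phi_lt g t : polyb g -> Iv t -> Rbar_lt (Rabs (sin t ^ 2)) (CV_radius (fun k => g k * beta k)).
Proof.
  intros Hg Ht. apply Rbar_lt_le_trans with 1. simpl. apply Iv_sin2; auto.
  apply radius_poly; auto.
Qed.

Lemma Phi_ex g t : polyb g -> Iv t -> ex_pseries (fun k => g k * beta k) (sin t ^ 2).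
Proof. intros. apply CV_radius_inside, Phi_lt; auto. Qed.

Lemma Phi_derive g t : polyb g -> Iv t -> is_derive (Phi g) t (2 * sin t * cos t * DPhi g t).
Proof.
  intros Hg Ht. unfold Phi, DPhi.
  assert (Hs : is_derive (fun t => sin t ^ 2) t (2 * sin t * cos t)).
  { auto_derive; auto. ring. }
  assert (HP := is_derive_PSeries _ _ (Phi_lt g t Hg Ht)).
  apply (is_derive_comp (PSeries (fun k => g k * beta k)) (fun t => sin t ^ 2) t _ _ HP Hs).
Qed.

Lemma DPhi_cont g t : polyb g -> Iv t -> continuous (DPhi g) t.
Proof.
  intros Hg Ht. unfold DPhi.
  apply continuity_pt_filterlim.
  apply (continuity_pt_comp (fun t => sin t ^ 2) (PSeries (PS_derive (fun k => g k * beta k)))).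
  - reg.
  - apply PSeries_continuity.
    rewrite CV_radius_derive. apply Phi_lt; auto.
Qed.

Lemma cont_of_derive (f : R -> R) t l : is_derive f t l -> continuous f t.
Proof.
  intros H. apply (ex_derive_continuous (K:=R_AbsRing) (V:=R_NormedModule)). exists l. exact H.
Qed.

Lemma Phi_cont g t : polyb g -> Iv t -> continuous (Phi g) t.
Proof.
  intros Hg Ht. eapply cont_of_derive. apply Phi_derive; auto.
Qed.

Lemma sin2_DPhi g t : sin t ^ 2 * DPhi g t = Phi (fun k => INR k * g k) t.
Proof.
  unfold DPhi, Phi. rewrite <- PSeries_incr_1. apply PSeries_ext.
  intros [|k]; unfold PS_incr_1, PS_derive. change (zero : R) with 0. simpl; ring.
  ring.
Qed.

Lemma DPhi_as_Phi g t : DPhi g t = Phi (fun k => (2 * INR k + 1) / 2 * g (S k)) t.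
Proof.
  unfold DPhi, Phi. apply PSeries_ext. intros k. unfold PS_derive.
  rewrite beta_S, S_INR. assert (H := pos_INR k). field. lra.
Qed.

Lemma Phi_ext g1 g2 t : (forall k, g1 k = g2 k) -> Phi g1 t = Phi g2 t.
Proof. intros H. unfold Phi. apply PSeries_ext. intros k. rewrite H. auto. Qed.

Lemma Phi_lin g1 g2 c t : polyb g1 -> polyb g2 -> Iv t ->
  Phi g1 t + c * Phi g2 t = Phi (fun k => g1 k + c * g2 k) t.
Proof.
  intros H1 H2 Ht. unfold Phi. rewrite <- PSeries_scal, <- PSeries_plus.
  - apply PSeries_ext. intros k. unfold PS_plus, PS_scal.
    change (plus ?a ?b) with (Rplus a b). change (scal ?a ?b) with (Rmult a b). ring.
  - apply Phi_ex; auto.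
  - apply ex_pseries_scal; [apply Rmult_comm | apply Phi_ex; auto].
Qed.

Definition shiftup (g : nat -> R) (k : nat) : R :=
  match k with O => 0 | S j => g j * beta j / beta (S j) end.

Lemma sin2_Phi g t : sin t ^ 2 * Phi g t = Phi (shiftup g) t.
Proof.
  unfold Phi. rewrite <- PSeries_incr_1. apply PSeries_ext.
  intros [|k]; unfold PS_incr_1, shiftup. change (zero : R) with 0. simpl; ring.
  field. apply Rgt_not_eq, beta_pos.
Qed.

Lemma Phi_0 g : Phi g 0 = g 0%nat.
Proof. unfold Phi. rewrite sin_0. simpl. rewrite Rmult_0_l. rewrite PSeries_0, beta_0. ring. Qed.


Fixpoint psum (g : nat -> R) (k : nat) : R :=
  match k with O => 0 | S j => psum g j + g j end.

Lemma polyb_M g M p : (forall k, Rabs (g k) <= M * (INR k + 1) ^ p) -> 0 <= M.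
Proof.
  intros H. specialize (H 0%nat). replace ((INR 0 + 1) ^ p) with 1 in H
    by (simpl; rewrite Rplus_0_l, pow1; ring). assert (0 <= Rabs (g 0%nat)) by apply Rabs_pos. lra.
Qed.

Lemma pow_mono_exp x p q : 1 <= x -> (p <= q)%nat -> x ^ p <= x ^ q.
Proof. intros. apply Rle_pow; auto. Qed.

Lemma polyb_gen g h (f : nat -> nat) A q : polyb g -> 0 <= A -> (forall k, (f k <= S k)%nat) ->
  (forall k, Rabs (h k) <= A * (INR k + 1) ^ q * Rabs (g (f k))) -> polyb h.
Proof.
  intros [M [p Hg]] HA Hf H. assert (HM := polyb_M _ _ _ Hg).
  exists (A * M * 2 ^ p), (q + p)%nat. intros k.
  apply Rle_trans with (1 := H k). rewrite pow_add.
  assert (Hk := pos_INR k).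
  assert (Hb : Rabs (g (f k)) <= M * 2 ^ p * (INR k + 1) ^ p).
  { apply Rle_trans with (1 := Hg (f k)). rewrite Rmult_assoc. apply Rmult_le_compat_l; auto.
    rewrite <- Rpow_mult_distr. apply pow_incr. split.
    assert (H0 := pos_INR (f k)). lra. assert (H1 := Hf k). apply le_INR in H1. rewrite S_INR in H1. lra. }
  assert (0 <= (INR k + 1) ^ q) by (apply pow_le; lra).
  apply Rle_trans with (A * (INR k + 1) ^ q * (M * 2 ^ p * (INR k + 1) ^ p)).
  apply Rmult_le_compat_l; auto. apply Rmult_le_pos; auto. right; ring.
Qed.

Lemma polyb_lin g1 g2 c : polyb g1 -> polyb g2 -> polyb (fun k => g1 k + c * g2 k).
Proof.
  intros [M1 [p1 H1]] [M2 [p2 H2]].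
  assert (HM1 := polyb_M _ _ _ H1). assert (HM2 := polyb_M _ _ _ H2).
  exists (M1 + Rabs c * M2), (p1 + p2)%nat. intros k. assert (Hk := pos_INR k).
  assert (Ha : (INR k + 1) ^ p1 <= (INR k + 1) ^ (p1 + p2)) by (apply pow_mono_exp; lia || lra).
  assert (Hb : (INR k + 1) ^ p2 <= (INR k + 1) ^ (p1 + p2)) by (apply pow_mono_exp; lia || lra).
  apply Rle_trans with (1 := Rabs_triang _ _). rewrite Rabs_mult.
  specialize (H1 k). specialize (H2 k). assert (0 <= Rabs c) by apply Rabs_pos.
  assert (Rabs c * Rabs (g2 k) <= Rabs c * (M2 * (INR k + 1) ^ p2)) by (apply Rmult_le_compat_l; auto).
  assert (M1 * (INR k + 1) ^ p1 <= M1 * (INR k + 1) ^ (p1 + p2)) by (apply Rmult_le_compat_l; auto).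
  assert (Rabs c * (M2 * (INR k + 1) ^ p2) <= Rabs c * (M2 * (INR k + 1) ^ (p1 + p2))).
  { apply Rmult_le_compat_l; auto. apply Rmult_le_compat_l; auto. }
  lra.
Qed.

Lemma polyb_psum g : polyb g -> polyb (psum g).
Proof.
  intros [M [p H]]. assert (HM := polyb_M _ _ _ H).
  assert (Hi : forall k, Rabs (psum g k) <= INR k * M * (INR k + 1) ^ p).
  { induction k. simpl. rewrite Rabs_R0. lra.
    simpl psum. apply Rle_trans with (1 := Rabs_triang _ _).
    assert (Hk := pos_INR k). rewrite S_INR.
    assert (Hm : (INR k + 1) ^ p <= (INR k + 1 + 1) ^ p) by (apply pow_incr; lra).
    assert (0 <= (INR k + 1) ^ p) by (apply pow_le; lra).
    specialize (H k).
    assert (INR k * M * (INR k + 1) ^ p <= INR k * M * (INR k + 1 + 1) ^ p).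
    { apply Rmult_le_compat_l; auto. apply Rmult_le_pos; auto. }
    assert (M * (INR k + 1) ^ p <= M * (INR k + 1 + 1) ^ p) by (apply Rmult_le_compat_l; auto).
    lra. }
  exists M, (S p). intros k. apply Rle_trans with (1 := Hi k). simpl.
  assert (Hk := pos_INR k). assert (0 <= (INR k + 1) ^ p) by (apply pow_le; lra).
  assert (0 <= M * (INR k + 1) ^ p) by (apply Rmult_le_pos; auto). nra.
Qed.

Lemma polyb_div g d : polyb g -> (forall k, g k = 0 \/ 1 <= Rabs (d k)) -> polyb (fun k => g k / d k).
Proof.
  intros Hg Hd. apply (polyb_gen g _ (fun k => k) 1 0); auto; try lra.
  intros k. simpl. rewrite !Rmult_1_l. destruct (Hd k) as [H|H].
  - rewrite H. unfold Rdiv. rewrite Rmult_0_l, Rabs_R0. lra.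
  - unfold Rdiv. rewrite Rabs_mult, Rabs_inv.
    assert (0 <= Rabs (g k)) by apply Rabs_pos.
    assert (0 < / Rabs (d k) <= 1).
    { split. apply Rinv_0_lt_compat; lra. rewrite <- Rinv_1. apply Rinv_le_contravar; lra. }
    nra.
Qed.

Lemma polyb_delta n : polyb (fun k => if Nat.eqb k n then 1 else 0).
Proof.
  exists 1, 0%nat. intros k. simpl. destruct (Nat.eqb k n); rewrite ?Rabs_R1, ?Rabs_R0; lra.
Qed.

Lemma polyb_mulk g : polyb g -> polyb (fun k => INR k * g k).
Proof.
  intros Hg. apply (polyb_gen g _ (fun k => k) 1 1); auto; try lra.
  intros k. rewrite Rabs_mult, Rabs_pos_eq by apply pos_INR. simpl.
  assert (H := pos_INR k). assert (0 <= Rabs (g k)) by apply Rabs_pos. nra.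
Qed.

Lemma polyb_shiftup g : polyb g -> polyb (shiftup g).
Proof.
  intros Hg. apply (polyb_gen g _ (fun k => pred k) 2 0); auto; try lra.
  intros k; lia.
  intros [|k]; simpl; unfold shiftup. rewrite Rabs_R0. assert (0 <= Rabs (g 0%nat)) by apply Rabs_pos. lra.
  rewrite beta_S. assert (H := pos_INR k). assert (Hb := beta_pos k).
  replace (g k * beta k / (beta k * (2 * INR k + 1) / (2 * INR k + 2))) with
    (g k * ((2 * INR k + 2) / (2 * INR k + 1))) by (field; lra).
  rewrite Rabs_mult, (Rabs_pos_eq ((2 * INR k + 2) / (2 * INR k + 1))).
  2: { apply Rlt_le, Rdiv_lt_0_compat; lra. }
  assert ((2 * INR k + 2) / (2 * INR k + 1) <= 2).
  { apply Rmult_le_reg_r with (2 * INR k + 1). lra. unfold Rdiv. rewrite Rmult_assoc, Rinv_l by lra. lra. }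
  assert (0 <= Rabs (g k)) by apply Rabs_pos. nra.
Qed.

Definition shiftdown (g : nat -> R) (k : nat) : R := g (S k) * beta (S k) / beta k.

Lemma shiftdown_eq g k : shiftdown g k = (2 * INR k + 1) / (2 * INR k + 2) * g (S k).
Proof.
  unfold shiftdown. rewrite beta_S. assert (H := pos_INR k). assert (Hb := beta_pos k).
  field. lra.
Qed.

Lemma polyb_shiftdown g : polyb g -> polyb (shiftdown g).
Proof.
  intros Hg. apply (polyb_gen g _ S 1 0); auto; try lra.
  intros k. rewrite shiftdown_eq. simpl. rewrite !Rmult_1_l, Rabs_mult.
  assert (H := pos_INR k).
  rewrite (Rabs_pos_eq ((2 * INR k + 1) / (2 * INR k + 2))).
  2: { apply Rlt_le, Rdiv_lt_0_compat; lra. }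
  assert ((2 * INR k + 1) / (2 * INR k + 2) <= 1).
  { apply Rmult_le_reg_r with (2 * INR k + 2). lra. unfold Rdiv. rewrite Rmult_assoc, Rinv_l by lra. lra. }
  assert (0 <= Rabs (g (S k))) by apply Rabs_pos. nra.
Qed.

Lemma shiftup_shiftdown g : g 0%nat = 0 -> forall k, shiftup (shiftdown g) k = g k.
Proof.
  intros H0 [|k]; unfold shiftup, shiftdown. auto.
  assert (H1 := beta_pos k). assert (H2 := beta_pos (S k)). field. lra.
Qed.

Lemma polyb_dcoef g : polyb g -> polyb (fun k => (2 * INR k + 1) / 2 * g (S k)).
Proof.
  intros Hg. apply (polyb_gen g _ S 1 1); auto; try lra.
  intros k. rewrite Rabs_mult. assert (H := pos_INR k).
  rewrite (Rabs_pos_eq ((2 * INR k + 1) / 2)) by lra. simpl.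
  assert (0 <= Rabs (g (S k))) by apply Rabs_pos. nra.
Qed.

Lemma polyb_ext g h : polyb g -> (forall k, g k = h k) -> polyb h.
Proof. intros [M [p H]] E. exists M, p. intros k. rewrite <- E. auto. Qed.

Lemma polyb_add g1 g2 : polyb g1 -> polyb g2 -> polyb (fun k => g1 k + g2 k).
Proof. intros H1 H2. apply (polyb_ext _ _ (polyb_lin g1 g2 1 H1 H2)). intros; ring. Qed.

Lemma polyb_scal g c : polyb g -> polyb (fun k => c * g k).
Proof.
  intros [M [p H]]. exists (Rabs c * M), p. intros k. rewrite Rabs_mult, Rmult_assoc.
  apply Rmult_le_compat_l; auto. apply Rabs_pos.
Qed.

Lemma polyb_sub g1 g2 : polyb g1 -> polyb g2 -> polyb (fun k => g1 k - g2 k).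
Proof. intros H1 H2. apply (polyb_ext _ _ (polyb_lin g1 g2 (-1) H1 H2)). intros; ring. Qed.

Ltac polyb_tac := repeat first [ assumption | apply polyb_add | apply polyb_sub | apply polyb_scal
  | apply polyb_mulk | apply polyb_psum | apply polyb_shiftup | apply polyb_shiftdown | apply polyb_dcoef ].


Definition C0 (f : R -> R) := forall t, Iv t -> continuous f t.

Lemma cont_mult (f g : R -> R) t : continuous f t -> continuous g t -> continuous (fun t => f t * g t) t.
Proof.
  intros H1 H2. apply continuity_pt_filterlim. apply continuity_pt_filterlim in H1.
  apply continuity_pt_filterlim in H2. apply (continuity_pt_mult f g t H1 H2).
Qed.

Lemma cont_plus (f g : R -> R) t : continuous f t -> continuous g t -> continuous (fun t => f t + g t) t.
Proof.
  intros H1 H2. apply continuity_pt_filterlim. apply continuity_pt_filterlim in H1.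
  apply continuity_pt_filterlim in H2. apply (continuity_pt_plus f g t H1 H2).
Qed.

Lemma cont_minus (f g : R -> R) t : continuous f t -> continuous g t -> continuous (fun t => f t - g t) t.
Proof.
  intros H1 H2. apply continuity_pt_filterlim. apply continuity_pt_filterlim in H1.
  apply continuity_pt_filterlim in H2. apply (continuity_pt_minus f g t H1 H2).
Qed.

Lemma cont_inv (f : R -> R) t : continuous f t -> f t <> 0 -> continuous (fun t => / f t) t.
Proof.
  intros H1 H2. apply continuity_pt_filterlim. apply continuity_pt_filterlim in H1.
  apply (continuity_pt_inv f t H1 H2).
Qed.

Lemma cont_const (c t : R) : continuous (fun _ : R => c) t.
Proof. apply continuity_pt_filterlim. apply continuity_pt_const. intros a b; auto. Qed.

Lemma cont_sin t : continuous sin t.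
Proof. apply continuity_pt_filterlim. apply continuity_sin. Qed.

Lemma cont_cos t : continuous cos t.
Proof. apply continuity_pt_filterlim. apply continuity_cos. Qed.

Lemma cont_ext_Iv (f g : R -> R) t : Iv t -> (forall u, Iv u -> f u = g u) -> continuous f t -> continuous g t.
Proof.
  intros Ht E H. apply (continuous_ext_loc g f t); auto.
  destruct Ht as [H1 H2].
  assert (Hd : 0 < Rmin (t + PI / 2) (PI / 2 - t)) by (apply Rmin_pos; lra).
  exists (mkposreal _ Hd). intros u Hu. simpl in Hu. unfold ball in Hu; simpl in Hu; unfold AbsRing_ball, abs, minus, plus, opp in Hu; simpl in Hu.
  apply E. apply Rabs_def2 in Hu. destruct Hu.
  assert (Rmin (t + PI / 2) (PI / 2 - t) <= t + PI/2) by apply Rmin_l.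
  assert (Rmin (t + PI / 2) (PI / 2 - t) <= PI/2 - t) by apply Rmin_r.
  unfold Iv. lra.
Qed.

Lemma cont_tan t : Iv t -> continuous tan t.
Proof.
  intros Ht. unfold tan. apply (cont_mult sin (fun t => / cos t)); [apply cont_sin|].
  apply cont_inv. apply cont_cos. apply Rgt_not_eq, Iv_cos; auto.
Qed.

Lemma Iv_between y x : Iv y -> Rmin 0 y <= x <= Rmax 0 y -> Iv x.
Proof.
  intros [H1 H2] [H3 H4]. assert (H := PI_RGT_0).
  unfold Rmin, Rmax in *. destruct (Rle_dec 0 y); split; lra.
Qed.

Lemma Iv_between_open y x : Iv y -> Rmin 0 y < x < Rmax 0 y -> Iv x /\ x <> 0.
Proof.
  intros Hy [H3 H4]. split. apply (Iv_between y); [exact Hy| split; lra].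
  unfold Rmin, Rmax in *. destruct (Rle_dec 0 y); intro; lra.
Qed.

Lemma ftc0 (F dF f : R -> R) y : Iv y ->
  (forall t, Iv t -> is_derive F t (dF t)) -> C0 dF ->
  (forall t, Iv t -> t <> 0 -> f t = dF t) -> is_RInt f 0 y (F y - F 0).
Proof.
  intros Hy HD HC E.
  apply (is_RInt_ext dF). intros x Hx. destruct (Iv_between_open y x Hy Hx). symmetry; auto.
  apply (is_RInt_derive F dF 0 y).
  intros x Hx; apply HD; apply (Iv_between y); auto.
  intros x Hx; apply HC; apply (Iv_between y); auto.
Qed.

Lemma is_derive_mult_R (f g : R -> R) x a b : is_derive f x a -> is_derive g x b ->
  is_derive (fun t => f t * g t) x (a * g x + f x * b).
Proof.
  intros H1 H2. apply is_derive_Reals. apply is_derive_Reals in H1. apply is_derive_Reals in H2.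
  apply (derivable_pt_lim_mult f g x a b H1 H2).
Qed.

Lemma Phi_scal g c t : c * Phi g t = Phi (fun k => c * g k) t.
Proof.
  unfold Phi. rewrite <- PSeries_scal. apply PSeries_ext. intros k. unfold PS_scal.
  change (scal ?a ?b) with (Rmult a b). ring.
Qed.

Lemma DPhi_cont' g : polyb g -> C0 (fun t => 2 * sin t * cos t * DPhi g t).
Proof.
  intros Hg t Ht. apply (cont_mult (fun t => 2 * sin t * cos t)); [|apply DPhi_cont; auto].
  apply (cont_mult (fun t => 2 * sin t)); [|apply cont_cos].
  apply (cont_mult (fun _ => 2)); [apply cont_const|apply cont_sin].
Qed.

Lemma Phi_add g1 g2 t : polyb g1 -> polyb g2 -> Iv t ->
  Phi g1 t + Phi g2 t = Phi (fun k => g1 k + g2 k) t.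
Proof.
  intros H1 H2 Ht. rewrite <- (Rmult_1_l (Phi g2 t)), Phi_lin; auto.
  apply Phi_ext. intros; ring.
Qed.

Lemma int_cot g y : polyb g -> g 0%nat = 0 -> Iv y ->
  is_RInt (fun t => cotf t * Phi g t) 0 y (Phi (fun k => g k / (2 * INR k)) y).
Proof.
  intros Hg H0 Hy.
  set (g' := fun k => g k / (2 * INR k)).
  assert (Hg' : polyb g').
  { apply polyb_div; auto. intros [|k]. left; auto. right. rewrite S_INR.
    assert (H := pos_INR k). rewrite Rabs_pos_eq; lra. }
  replace (Phi g' y) with (Phi g' y - Phi g' 0).
  2: { rewrite Phi_0. unfold g'. rewrite H0. unfold Rdiv. ring. }
  apply (ftc0 _ (fun t => 2 * sin t * cos t * DPhi g' t)); auto.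
  - intros t Ht. apply Phi_derive; auto.
  - apply DPhi_cont'; auto.
  - intros t Ht Ht0. assert (Hs := Iv_sin_neq0 t Ht Ht0).
    replace (2 * sin t * cos t * DPhi g' t) with (cos t / sin t * (2 * (sin t ^ 2 * DPhi g' t))) by (field; auto).
    rewrite sin2_DPhi, (Phi_scal (fun k => INR k * g' k) 2). unfold cotf. f_equal. apply Phi_ext.
    intros [|k]. unfold g'. simpl. rewrite H0. ring.
    unfold g'. rewrite S_INR. assert (H := pos_INR k). field. lra.
Qed.

Lemma int_cos g y : polyb g -> Iv y ->
  is_RInt (fun t => cos t * Phi g t) 0 y (sin y * Phi (fun k => g k / (2 * INR k + 1)) y).
Proof.
  intros Hg Hy.
  set (g' := fun k => g k / (2 * INR k + 1)).
  assert (Hg' : polyb g').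
  { apply polyb_div; auto. intros k. right.
    assert (H := pos_INR k). rewrite Rabs_pos_eq; lra. }
  replace (sin y * Phi g' y) with (sin y * Phi g' y - sin 0 * Phi g' 0) by (rewrite sin_0; ring).
  apply (ftc0 (fun t => sin t * Phi g' t) (fun t => cos t * Phi g t)); auto.
  - intros t Ht. 
    assert (Hs : is_derive sin t (cos t)) by (auto_derive; auto; ring).
    assert (H := is_derive_mult_R _ _ _ _ _ Hs (Phi_derive g' t Hg' Ht)).
    replace (cos t * Phi g t) with (cos t * Phi g' t + sin t * (2 * sin t * cos t * DPhi g' t)); auto.
    replace (cos t * Phi g' t + sin t * (2 * sin t * cos t * DPhi g' t)) with
      (cos t * (Phi g' t + 2 * (sin t ^ 2 * DPhi g' t))) by ring.
    rewrite sin2_DPhi, Phi_lin; auto. 2: apply polyb_mulk; auto.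
    f_equal. apply Phi_ext. intros k. unfold g'. assert (H1 := pos_INR k). field. lra.
  - intros t Ht. apply (cont_mult cos); [apply cont_cos | apply Phi_cont; auto].
Qed.

Lemma int_dsec g y : polyb g -> Iv y ->
  is_RInt (fun t => dsec t * Phi g t) 0 y (sin y * tan y * Phi g y - cos y * Phi (psum g) y).
Proof.
  intros Hg Hy. set (G := psum g). assert (HG : polyb G) by (apply polyb_psum; auto).
  replace (sin y * tan y * Phi g y - cos y * Phi G y) with
    ((sin y * (sin y / cos y) * Phi g y - cos y * Phi G y) -
     (sin 0 * (sin 0 / cos 0) * Phi g 0 - cos 0 * Phi G 0)).
  2: { rewrite sin_0, cos_0, !Phi_0. unfold G. simpl. unfold tan. field. apply Rgt_not_eq, Iv_cos; auto. }
  apply (ftc0 (fun t => sin t * (sin t / cos t) * Phi g t - cos t * Phi G t) (fun t => dsec t * Phi g t)); auto.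
  - intros t Ht. assert (Hc := Iv_cos t Ht).
    assert (H1 : is_derive (fun t => sin t * (sin t / cos t)) t (sin t * (2 * cos t ^ 2 + sin t ^ 2) / cos t ^ 2)).
    { auto_derive. lra. field. lra. }
    assert (H2 : is_derive cos t (- sin t)) by (auto_derive; auto; ring).
    assert (H3 := is_derive_mult_R _ _ _ _ _ H1 (Phi_derive g t Hg Ht)).
    assert (H4 := is_derive_mult_R _ _ _ _ _ H2 (Phi_derive G t HG Ht)).
    assert (H5 := is_derive_minus _ _ _ _ _ H3 H4).
    match type of H5 with is_derive _ _ ?v => replace (dsec t * Phi g t) with v; [exact H5|] end.
    change (minus ?a ?b) with (a - b).
    set (s := sin t) in *. set (c := cos t) in *.
    set (P := Phi g t). set (Q := Phi G t). set (D := DPhi g t). set (E := DPhi G t).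
    assert (R1 : s ^ 2 * D = Phi (fun k => INR k * g k) t) by apply sin2_DPhi.
    assert (R2 : s ^ 2 * E = Phi (fun k => INR k * G k) t) by apply sin2_DPhi.
    assert (R3 : P + 2 * Phi (fun k => INR k * g k) t + Q + 2 * Phi (fun k => INR k * G k) t = 2 * E).
    { unfold P, Q, E. rewrite DPhi_as_Phi. rewrite !Phi_scal.
      rewrite !Phi_add by (auto; polyb_tac).
      apply Phi_ext. intros k. unfold G. simpl psum. field. }
    assert (Z : s ^ 2 + c ^ 2 = 1) by (unfold s, c; rewrite <- (sin2_cos2 t); unfold Rsqr; ring).
    set (A := Phi (fun k => INR k * g k) t) in *. set (B := Phi (fun k => INR k * G k) t) in *.
    unfold dsec, secf, tan. fold s c.
    assert (Hc0 : c <> 0) by lra.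
    apply Rminus_diag_uniq.
    match goal with |- ?L = 0 => replace L with
      (s * (P + 2 * A + Q + 2 * B - 2 * E) + 2 * s * (s ^ 2 * D - A) + 2 * s * (s ^ 2 * E - B)
            + s * (s ^ 2 + c ^ 2 - 1) * (P / c ^ 2 - 2 * E)) by (field; auto) end.
    rewrite R1, R2, Z. rewrite <- R3. ring.
  - intros t Ht. apply (cont_mult dsec); [|apply Phi_cont; auto].
    unfold dsec, secf. apply (cont_mult (fun t => 1 / cos t)); [|apply cont_tan; auto].
    apply (cont_mult (fun _ => 1)); [apply cont_const|]. apply cont_inv. apply cont_cos.
    apply Rgt_not_eq, Iv_cos; auto.
Qed.

Ltac reqR := match goal with |- ?a = ?b => change (@eq R a b) end.


Fixpoint op (w : word) (g : R -> R) (y : R) : R :=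
  match w with
  | [] => g y
  | Mul F :: w' => F y * op w' g y
  | Form f :: w' => RInt (fun t => f t * op w' g t) 0 y
  end.

Lemma op_app w1 w2 g y : op (w1 ++ w2) g y = op w1 (op w2 g) y.
Proof.
  revert y. induction w1 as [|[f|F] w1 IH]; intros y; simpl; auto.
  - f_equal. apply functional_extensionality. intros t. rewrite IH. auto.
  - rewrite IH. auto.
Qed.

Lemma iint_op w y : iint w y = op w (fun _ => 1) y.
Proof.
  revert y. induction w as [|[f|F] w IH]; intros y; simpl; auto.
  - f_equal. apply functional_extensionality. intros t. rewrite IH. auto.
  - rewrite IH. auto.
Qed.

Lemma iint_app w w' y : iint (w ++ w') y = op w (iint w') y.
Proof.
  revert y. induction w as [|[f|F] w IH]; intros y; simpl; auto.
  - f_equal. apply functional_extensionality. intros t. rewrite IH. auto.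
  - rewrite IH. auto.
Qed.

Definition Dcl (g d : R -> R) := (forall t, Iv t -> is_derive g t (d t)) /\ C0 d /\ g 0 = 0.
Definition O1 g := exists d, Dcl g d.
Definition O2 g := exists d, Dcl g d /\ d 0 = 0.
Definition Qc g := exists h, C0 h /\ forall y, Iv y -> g y = RInt (fun t => tansec t * h t) 0 y.

Definition Good (w : word) (A B : (R -> R) -> Prop) :=
  (forall g, A g -> B (op w g)) /\
  (forall g1 g2 c, A g1 -> A g2 -> forall y, Iv y ->
     op w (fun t => c * g1 t + g2 t) y = c * op w g1 y + op w g2 y) /\
  (forall g1 g2, (forall t, Iv t -> g1 t = g2 t) -> forall y, Iv y -> op w g1 y = op w g2 y) /\
  (forall g gx, A g -> (forall u, -1 < u < 1 -> gx u = g (asin u)) ->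
     forall x, -1 < x < 1 -> op (map subst_letter w) gx x = op w g (asin x)).

Lemma O1_C0 g : O1 g -> C0 g.
Proof. intros [d [H _]] t Ht. eapply cont_of_derive. apply H; auto. Qed.

Lemma O2_O1 g : O2 g -> O1 g.
Proof. intros [d [H _]]. exists d; auto. Qed.

Lemma Good_weak w A B A' B' : Good w A B -> (forall g, A' g -> A g) -> (forall g, B g -> B' g) -> Good w A' B'.
Proof.
  intros [H1 [H2 [H3 H4]]] HA HB. repeat split; auto.
Qed.

Lemma Good_nil A : Good [] A A.
Proof.
  repeat split; simpl; auto.
Qed.

Lemma Good_app w1 w2 A B C : Good w1 B C -> Good w2 A B -> Good (w1 ++ w2) A C.
Proof.
  intros [H1 [H2 [H3 H4]]] [K1 [K2 [K3 K4]]]. repeat split.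
  - intros g Hg. assert (E : op (w1 ++ w2) g = op w1 (op w2 g)).
    { apply functional_extensionality. intros; apply op_app. }
    rewrite E. auto.
  - intros g1 g2 c Hg1 Hg2 y Hy. rewrite !op_app.
    rewrite (H3 _ (fun t => c * op w2 g1 t + op w2 g2 t)); auto.
  - intros g1 g2 E y Hy. rewrite !op_app. apply H3; auto.
  - intros g gx Hg Hgx x Hx. rewrite map_app, !op_app. apply H4; auto.
    all: try (intros u Hu; apply K4; auto).
Qed.

Lemma locally_Iv t : Iv t -> locally t Iv.
Proof.
  intros [H1 H2].
  assert (Hd : 0 < Rmin (t + PI / 2) (PI / 2 - t)) by (apply Rmin_pos; lra).
  exists (mkposreal _ Hd). intros u Hu. simpl in Hu. unfold ball in Hu; simpl in Hu; unfold AbsRing_ball, abs, minus, plus, opp in Hu; simpl in Hu.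
  apply Rabs_def2 in Hu. destruct Hu.
  assert (Rmin (t + PI / 2) (PI / 2 - t) <= t + PI/2) by apply Rmin_l.
  assert (Rmin (t + PI / 2) (PI / 2 - t) <= PI/2 - t) by apply Rmin_r.
  unfold Iv. lra.
Qed.

Lemma ex_RInt_C0 E y : C0 E -> Iv y -> ex_RInt E 0 y.
Proof. intros HE Hy. apply (ex_RInt_continuous (V:=R_CompleteNormedModule)). intros z Hz. apply HE. apply (Iv_between y); auto. Qed.

Lemma Form_out (f g E : R -> R) : C0 E -> (forall t, Iv t -> t <> 0 -> E t = f t * g t) ->
  Dcl (fun y => RInt (fun t => f t * g t) 0 y) E.
Proof.
  intros HE HfE. split; [|split; auto].
  - intros t Ht. apply (is_derive_ext_loc (RInt E 0)).
    + generalize (locally_Iv t Ht). apply filter_imp. intros y Hy. apply RInt_ext.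
      intros x Hx. destruct (Iv_between_open y x Hy Hx). auto.
    + apply (is_derive_RInt E (RInt E 0) 0 t).
      * generalize (locally_Iv t Ht). apply filter_imp. intros y Hy. apply (RInt_correct (V:=R_CompleteNormedModule)), ex_RInt_C0; auto.
      * apply HE; auto.
  - simpl. rewrite RInt_point. reflexivity.
Qed.

Lemma Iv_asin u : -1 < u < 1 -> Iv (asin u).
Proof. intros H. apply asin_bound_lt; auto. Qed.

Lemma CV_lemma (f g gx E : R -> R) x : C0 E -> (forall t, Iv t -> t <> 0 -> E t = f t * g t) ->
  (forall u, -1 < u < 1 -> gx u = g (asin u)) -> -1 < x < 1 ->
  RInt (fun u => f (asin u) / sqrt (1 - u ^ 2) * gx u) 0 x = RInt (fun t => f t * g t) 0 (asin x).
Proof.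
  intros HE HfE Hgx Hx.
  assert (Hax := Iv_asin x Hx).
  rewrite (RInt_ext (fun t => f t * g t) E).
  2: { intros t Ht. destruct (Iv_between_open _ t Hax Ht). symmetry; auto. }
  set (K := fun u => E (asin u) / sqrt (1 - u ^ 2)).
  assert (Hu1 : forall u, Rmin 0 x < u < Rmax 0 x -> -1 < u < 1 /\ u <> 0).
  { intros u Hu. unfold Rmin, Rmax in Hu. destruct (Rle_dec 0 x); split; try lra; intro; lra. }
  rewrite (RInt_ext _ K).
  2: { intros u Hu. destruct (Hu1 u Hu) as [Hu2 Hu3]. unfold K. rewrite Hgx by auto.
       rewrite HfE; auto. match goal with |- ?a = ?b => change (@eq R a b) end. field. apply Rgt_not_eq, sqrt_lt_R0. nra. apply Iv_asin; auto.
       intro Ha. apply Hu3. rewrite <- (sin_asin u), Ha, sin_0; auto; lra. }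
  replace (RInt K 0 x) with (RInt K (sin 0) (sin (asin x))) by (rewrite sin_0, sin_asin; auto; lra).
  rewrite <- (RInt_comp K sin cos).
  - apply RInt_ext. intros t Ht. destruct (Iv_between_open _ t Hax Ht) as [Ht1 Ht2].
    unfold K. rewrite asin_sin by (destruct Ht1; lra).
    assert (Hc := Iv_cos t Ht1).
    replace (1 - sin t ^ 2) with (cos t ^ 2) by (rewrite <- (sin2_cos2 t); unfold Rsqr; ring).
    rewrite sqrt_pow2 by lra. change (scal ?a ?b) with (Rmult a b). match goal with |- ?a = ?b => change (@eq R a b) end. field. lra.
  - intros t Ht. assert (Ht1 := Iv_between _ _ Hax Ht).
    assert (Hs : -1 < sin t < 1).
    { assert (H := Iv_sin2 t Ht1). rewrite Rabs_pos_eq in H by apply pow2_ge_0.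
      split; nra. }
    unfold K. apply (cont_mult (fun u => E (asin u)) (fun u => / sqrt (1 - u ^ 2))).
    + apply continuity_pt_filterlim.
      apply (continuity_pt_comp asin E).
      * apply derivable_continuous_pt. apply derivable_pt_asin; auto.
      * apply continuity_pt_filterlim. apply HE. apply Iv_asin; auto.
    + apply cont_inv.
      * apply continuity_pt_filterlim.
        apply (continuity_pt_comp (fun u => 1 - u ^ 2) sqrt). reg. apply continuity_pt_sqrt. nra.
      * apply Rgt_not_eq, sqrt_lt_R0. nra.
  - intros t Ht. split. auto_derive; auto; ring. apply cont_cos.
Qed.

Lemma Form_good f A B :
  (forall g, A g -> exists E, C0 E /\ (forall t, Iv t -> t <> 0 -> E t = f t * g t) /\
     B (fun y => RInt (fun t => f t * g t) 0 y)) -> Good [Form f] A B.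
Proof.
  intros H. split; [|split; [|split]].
  - intros g Hg. destruct (H g Hg) as [E [_ [_ HB]]]. simpl. exact HB.
  - intros g1 g2 c Hg1 Hg2 y Hy. simpl.
    destruct (H g1 Hg1) as [E1 [HE1 HfE1]]. destruct (H g2 Hg2) as [E2 [HE2 HfE2]].
    assert (X1 : ex_RInt (fun t => f t * g1 t) 0 y).
    { apply (ex_RInt_ext E1). intros x Hx. destruct (Iv_between_open y x Hy Hx). apply HfE1; auto.
      apply ex_RInt_C0; auto. }
    assert (X2 : ex_RInt (fun t => f t * g2 t) 0 y).
    { apply (ex_RInt_ext E2). intros x Hx. destruct (Iv_between_open y x Hy Hx). apply HfE2; auto.
      apply ex_RInt_C0; auto. }
    apply (is_RInt_unique (V:=R_CompleteNormedModule)).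
    apply (is_RInt_ext (fun t => plus (scal c (f t * g1 t)) (f t * g2 t))).
    { intros x _. change (scal ?a ?b) with (Rmult a b). change (plus ?a ?b) with (Rplus a b).
         match goal with |- ?a = ?b => change (@eq R a b) end. ring. }
    change (c * ?a + ?b) with (plus (scal c a) b).
    apply (is_RInt_plus (V:=R_CompleteNormedModule)).
    apply (is_RInt_scal (V:=R_CompleteNormedModule)). apply (RInt_correct (V:=R_CompleteNormedModule)); auto.
    apply (RInt_correct (V:=R_CompleteNormedModule)); auto.
  - intros g1 g2 E y Hy. simpl. apply RInt_ext. intros x Hx.
    destruct (Iv_between_open y x Hy Hx). rewrite E; auto.
  - intros g gx Hg Hgx x Hx. simpl. destruct (H g Hg) as [E [HE [HfE _]]].
    apply (CV_lemma f g gx E); auto.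
Qed.

Lemma Mul_good F A B : (forall g, A g -> B (fun y => F y * g y)) -> Good [Mul F] A B.
Proof.
  intros H. split; [|split; [|split]].
  - intros g Hg. simpl. apply H; auto.
  - intros. simpl. ring.
  - intros g1 g2 E y Hy. simpl. rewrite E; auto.
  - intros g gx Hg Hgx x Hx. simpl. rewrite Hgx; auto.
Qed.

Lemma Good_formcont f : C0 f -> f 0 = 0 -> Good [Form f] C0 O2.
Proof.
  intros Hf Hf0. apply Form_good. intros g Hg. exists (fun t => f t * g t).
  assert (HC : C0 (fun t => f t * g t)) by (intros t Ht; apply cont_mult; auto).
  split; auto. split; auto. exists (fun t => f t * g t). split.
  apply Form_out; auto. rewrite Hf0; ring.
Qed.

Lemma Good_form1 : Good [Form (fun _ => 1)] O1 O2.
Proof.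
  apply Form_good. intros g Hg. exists g. assert (HC := O1_C0 g Hg).
  split; auto. split. intros; ring. exists g. split.
  apply Form_out; auto. intros; ring. destruct Hg as [d [_ [_ H0]]]. auto.
Qed.

Lemma Good_tansec_Q : Good [Form tansec] C0 Qc.
Proof.
  apply Form_good. intros g Hg. exists (fun t => tansec t * g t). split.
  - intros t Ht. apply cont_mult; auto. unfold tansec, secf.
    apply cont_mult. apply cont_tan; auto. apply (cont_mult (fun _ => 1)). apply cont_const.
    apply cont_inv. apply cont_cos. apply Rgt_not_eq, Iv_cos; auto.
  - split; auto. exists g. split; auto.
Qed.

Lemma Good_mulC0 F : C0 F -> Good [Mul F] C0 C0.
Proof. intros HF. apply Mul_good. intros g Hg t Ht. apply cont_mult; auto. Qed.

Lemma cont_loc_eq (f g : R -> R) t (d : R) : 0 < d -> (forall u, Rabs (u - t) < d -> f u = g u) ->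
  continuous f t -> continuous g t.
Proof.
  intros Hd E H. apply (continuous_ext_loc g f t); auto.
  exists (mkposreal _ Hd). intros u Hu. simpl in Hu. unfold ball in Hu; simpl in Hu; unfold AbsRing_ball, abs, minus, plus, opp in Hu; simpl in Hu.
  apply E. auto.
Qed.

Definition E0 (g d : R -> R) (t : R) : R := if Req_EM_T t 0 then d 0 else g t / sin t.

Lemma E0_cont0 g d : Dcl g d -> continuity_pt (E0 g d) 0.
Proof.
  intros [HD [HC H0]].
  assert (Hg := HD 0 Iv_0). apply is_derive_Reals in Hg.
  assert (Hs := derivable_pt_lim_sin 0). rewrite cos_0 in Hs.
  set (L := d 0) in *.
  intros eps Heps. simpl.
  assert (HL := Rabs_pos L).
  destruct (Hg (eps / 4)) as [d1 Hd1]. lra.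
  assert (He2 : 0 < Rmin (1/2) (eps / (4 * (Rabs L + 1)))).
  { apply Rmin_pos. lra. apply Rdiv_lt_0_compat; lra. }
  destruct (Hs _ He2) as [d2 Hd2].
  exists (Rmin d1 d2). split. apply Rmin_pos; apply cond_pos.
  intros u [[_ Hu0] Hu]. unfold R_dist in *. rewrite Rminus_0_r in Hu.
  assert (Hu0' : u <> 0) by auto.
  unfold E0. destruct (Req_EM_T u 0) as [e|_]; [contradiction|].
  destruct (Req_EM_T 0 0) as [_|n]; [|contradiction].
  assert (Hu1 : Rabs u < d1) by (apply Rlt_le_trans with (1 := Hu); apply Rmin_l).
  assert (Hu2 : Rabs u < d2) by (apply Rlt_le_trans with (1 := Hu); apply Rmin_r).
  specialize (Hd1 u Hu0' Hu1). specialize (Hd2 u Hu0' Hu2).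
  rewrite Rplus_0_l, H0, Rminus_0_r in Hd1. rewrite Rplus_0_l, sin_0, Rminus_0_r in Hd2.
  set (a := g u / u) in *. set (b := sin u / u) in *.
  assert (E2 := Rmin_l (1/2) (eps / (4 * (Rabs L + 1)))).
  assert (E3 := Rmin_r (1/2) (eps / (4 * (Rabs L + 1)))).
  assert (Hb : 1/2 < b).
  { apply Rabs_def2 in Hd2. lra. }
  assert (Hsu : sin u <> 0).
  { intro Hz. unfold b in Hb. rewrite Hz in Hb. unfold Rdiv in Hb. rewrite Rmult_0_l in Hb. lra. }
  replace (g u / sin u) with (a / b) by (unfold a, b; field; auto).
  assert (Hab : Rabs (a - L * b) < eps / 2).
  { replace (a - L * b) with ((a - L) + L * (1 - b)) by ring.
    apply Rle_lt_trans with (1 := Rabs_triang _ _). rewrite Rabs_mult.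
    assert (Rabs (1 - b) < eps / (4 * (Rabs L + 1))).
    { rewrite Rabs_minus_sym. lra. }
    assert (Rabs L * Rabs (1 - b) <= Rabs L * (eps / (4 * (Rabs L + 1)))).
    { apply Rmult_le_compat_l; auto. lra. }
    assert (Rabs L * (eps / (4 * (Rabs L + 1))) <= eps / 4).
    { assert (Hq : Rabs L / (Rabs L + 1) <= 1).
      { apply Rmult_le_reg_r with (Rabs L + 1). lra. unfold Rdiv. rewrite Rmult_assoc, Rinv_l by lra. lra. }
      replace (Rabs L * (eps / (4 * (Rabs L + 1)))) with ((eps / 4) * (Rabs L / (Rabs L + 1))) by (field; lra).
      apply Rle_trans with ((eps/4) * 1); [apply Rmult_le_compat_l; lra | lra]. }
    lra. }
  change (d 0) with L.
  replace (a / b - L) with ((a - L * b) / b) by (field; lra).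
  unfold Rdiv. rewrite Rabs_mult, Rabs_inv, (Rabs_pos_eq b) by lra.
  apply Rlt_le_trans with ((eps / 2) * / b).
  apply Rmult_lt_compat_r. apply Rinv_0_lt_compat; lra. auto.
  apply Rmult_le_reg_r with b. lra. rewrite Rmult_assoc, Rinv_l by lra. nra.
Qed.

Lemma E0_C0 g d : Dcl g d -> C0 (E0 g d).
Proof.
  intros HDc t Ht. destruct (Req_EM_T t 0) as [->|Ht0].
  - apply continuity_pt_filterlim. apply E0_cont0; auto.
  - destruct HDc as [HD [HC H0]].
    apply (cont_loc_eq (fun u => g u / sin u) _ t (Rabs t)).
    + apply Rabs_pos_lt; auto.
    + intros u Hu. unfold E0. destruct (Req_EM_T u 0) as [->|]; auto.
      rewrite Rminus_0_l, Rabs_Ropp in Hu. lra.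
    + apply (cont_mult g (fun u => / sin u)). eapply cont_of_derive. apply HD; auto.
      apply cont_inv. apply cont_sin. apply Iv_sin_neq0; auto.
Qed.

Lemma Good_cot1 : Good [Form cotf] O1 O1.
Proof.
  apply Form_good. intros g [d Hd]. exists (fun t => cos t * E0 g d t).
  assert (HC : C0 (fun t => cos t * E0 g d t)).
  { intros t Ht. apply cont_mult. apply cont_cos. apply E0_C0; auto. }
  assert (HE : forall t, Iv t -> t <> 0 -> cos t * E0 g d t = cotf t * g t).
  { intros t Ht Ht0. unfold E0, cotf. destruct (Req_EM_T t 0); [contradiction|].
    field. apply Iv_sin_neq0; auto. }
  split; auto. split; auto. exists (fun t => cos t * E0 g d t). apply Form_out; auto.
Qed.

Lemma Good_cot2 : Good [Form cotf] O2 O2.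
Proof.
  apply Form_good. intros g [d [Hd Hd0]]. exists (fun t => cos t * E0 g d t).
  assert (HC : C0 (fun t => cos t * E0 g d t)).
  { intros t Ht. apply cont_mult. apply cont_cos. apply E0_C0; auto. }
  assert (HE : forall t, Iv t -> t <> 0 -> cos t * E0 g d t = cotf t * g t).
  { intros t Ht Ht0. unfold E0, cotf. destruct (Req_EM_T t 0); [contradiction|].
    field. apply Iv_sin_neq0; auto. }
  split; auto. split; auto. exists (fun t => cos t * E0 g d t). split. apply Form_out; auto.
  unfold E0. destruct (Req_EM_T 0 0); [|contradiction]. rewrite Hd0, cos_0. ring.
Qed.

Lemma Good_csc2 : Good [Form cscf] O2 O2.
Proof.
  apply Form_good. intros g [d [Hd Hd0]]. exists (E0 g d).
  assert (HC : C0 (E0 g d)) by (apply E0_C0; auto).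
  assert (HE : forall t, Iv t -> t <> 0 -> E0 g d t = cscf t * g t).
  { intros t Ht Ht0. unfold E0, cscf. destruct (Req_EM_T t 0); [contradiction|].
    field. apply Iv_sin_neq0; auto. }
  split; auto. split; auto. exists (E0 g d). split. apply Form_out; auto.
  unfold E0. destruct (Req_EM_T 0 0); [|contradiction]. auto.
Qed.

Lemma Good_mulcsc : Good [Mul cscf] O2 C0.
Proof.
  apply Mul_good. intros g [d [Hd Hd0]] t Ht.
  apply (cont_ext_Iv (E0 g d)); auto. 2: apply E0_C0; auto.
  intros u Hu. unfold E0, cscf. destruct (Req_EM_T u 0) as [->|n].
  - destruct Hd as [_ [_ H0]]. rewrite H0, Hd0. ring.
  - field. apply Iv_sin_neq0; auto.
Qed.


Lemma Iv_conv a b x : Iv a -> Iv b -> Rmin a b <= x <= Rmax a b -> Iv x.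
Proof.
  intros [H1 H2] [H3 H4] [H5 H6]. unfold Rmin, Rmax in *. destruct (Rle_dec a b); split; lra.
Qed.

Lemma tansec_C0 : C0 tansec.
Proof.
  intros t Ht. unfold tansec, secf.
  apply cont_mult. apply cont_tan; auto. apply (cont_mult (fun _ => 1)). apply cont_const.
  apply cont_inv. apply cont_cos. apply Rgt_not_eq, Iv_cos; auto.
Qed.

Lemma int_ktansec k a b : Iv a -> Iv b -> is_RInt (fun u => k * tansec u) a b (k * secf b - k * secf a).
Proof.
  intros Ha Hb. apply (is_RInt_derive (fun u => k * secf u) (fun u => k * tansec u)).
  - intros x Hx. assert (Hx' := Iv_conv a b x Ha Hb Hx). assert (Hc := Iv_cos x Hx').
    unfold secf, tansec, secf, tan. auto_derive. lra. field. lra.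
  - intros x Hx. assert (Hx' := Iv_conv a b x Ha Hb Hx). apply (cont_mult (fun _ => k)).
    apply cont_const. apply tansec_C0; auto.
Qed.

Lemma tansec_sign u : Iv u -> (0 <= u -> 0 <= tansec u) /\ (u <= 0 -> tansec u <= 0).
Proof.
  intros Hu. assert (Hc := Iv_cos u Hu). destruct Hu as [H1 H2]. assert (HP := PI_RGT_0).
  unfold tansec, secf, tan.
  replace (sin u / cos u * (1 / cos u)) with (sin u * / (cos u * cos u)) by (field; lra).
  assert (0 < / (cos u * cos u)) by (apply Rinv_0_lt_compat; nra).
  split; intros.
  - assert (0 <= sin u) by (apply sin_ge_0; lra). apply Rmult_le_pos; lra.
  - assert (Hm : 0 <= sin (- u)) by (apply sin_ge_0; lra). rewrite sin_neg in Hm.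
    assert (Hn : 0 <= - sin u * / (cos u * cos u)) by (apply Rmult_le_pos; lra).
    rewrite <- Ropp_mult_distr_l in Hn. lra.
Qed.

Lemma secf_0 : secf 0 = 1.
Proof. unfold secf. rewrite cos_0. field. Qed.

Lemma ex_RInt_C0' E a b : C0 E -> Iv a -> Iv b -> ex_RInt E a b.
Proof.
  intros HE Ha Hb. apply (ex_RInt_continuous (V:=R_CompleteNormedModule)). intros z Hz. apply HE.
  apply (Iv_conv a b); auto.
Qed.

Lemma RInt_ktansec k a b : Iv a -> Iv b -> RInt (fun u => k * tansec u) a b = k * secf b - k * secf a.
Proof. intros. apply (is_RInt_unique (V:=R_CompleteNormedModule)). apply int_ktansec; auto. Qed.

Lemma rem_est (h : R -> R) : C0 h -> forall eps, 0 < eps -> exists del, 0 < del /\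
  forall t, Iv t -> Rabs t < del ->
    Rabs (RInt (fun u => tansec u * h u) 0 t - h 0 * (secf t - 1)) <= eps * (secf t - 1).
Proof.
  intros Hh eps Heps.
  assert (Hc := Hh 0 Iv_0). apply continuity_pt_filterlim in Hc.
  destruct (Hc eps Heps) as [del [Hdel Hd]].
  exists del. split; auto. intros t Ht Htd.
  assert (Hbound : forall u, Rabs u < del -> Rabs (h u - h 0) < eps).
  { intros u Hu. destruct (Req_EM_T u 0) as [->|Hu0].
    - rewrite Rminus_diag, Rabs_R0; auto.
    - apply Hd. split. split. exact I. auto. simpl. unfold R_dist. rewrite Rminus_0_r. auto. }
  set (X := fun u => tansec u * (h u - h 0)).
  assert (HX : C0 X).
  { intros u Hu. unfold X. apply cont_mult. apply tansec_C0; auto. apply cont_minus. apply Hh; auto. apply cont_const. }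
  assert (HhC : C0 (fun u => tansec u * h u)) by (intros u Hu; apply cont_mult; [apply tansec_C0|apply Hh]; auto).
  assert (E1 : RInt (fun u => tansec u * h u) 0 t - h 0 * (secf t - 1) = RInt X 0 t).
  { rewrite (RInt_ext X (fun u => minus (tansec u * h u) (h 0 * tansec u))).
    2: { intros. unfold X. change (minus ?a ?b) with (Rminus a b). reqR. ring. }
    rewrite (RInt_minus (V:=R_CompleteNormedModule)).
    2: apply ex_RInt_C0'; auto; apply Iv_0.
    2: { apply (ex_RInt_ext (fun u => h 0 * tansec u)). auto. apply ex_RInt_C0'; auto. 2: apply Iv_0.
         intros u Hu. apply (cont_mult (fun _ => h 0)). apply cont_const. apply tansec_C0; auto. }
    rewrite RInt_ktansec; auto. rewrite secf_0. change (minus ?a ?b) with (Rminus a b). ring. apply Iv_0. }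
  rewrite E1.
  assert (Hs1 : 1 <= secf t).
  { unfold secf. assert (Hc1 := Iv_cos t Ht). assert (Hc2 := COS_bound t). 
    assert (cos t <= 1) by apply COS_bound.
    apply Rmult_le_reg_r with (cos t); auto. unfold Rdiv. rewrite Rmult_assoc, Rinv_l by lra. lra. }
  apply Rabs_le.
  destruct (Rle_or_lt 0 t) as [Ht0|Ht0].
  - assert (Hp : forall u, 0 < u < t -> - eps * tansec u <= X u <= eps * tansec u).
    { intros u Hu. assert (Hu' : Iv u) by (destruct Ht; split; lra).
      destruct (tansec_sign u Hu') as [Hs _]. assert (Hs' := Hs (Rlt_le _ _ (proj1 Hu))).
      assert (Hb := Hbound u). rewrite Rabs_pos_eq in Htd by lra. rewrite Rabs_pos_eq in Hb by lra.
      specialize (Hb ltac:(lra)). apply Rabs_def2 in Hb. unfold X. split; nra. }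
    split.
    + apply Rle_trans with (RInt (fun u => - eps * tansec u) 0 t).
      rewrite RInt_ktansec; auto. rewrite secf_0. lra. apply Iv_0.
      apply RInt_le; auto. apply ex_RInt_C0'; auto. 2: apply Iv_0.
      intros u Hu. apply (cont_mult (fun _ => - eps)). apply cont_const. apply tansec_C0; auto.
      apply ex_RInt_C0'; auto. apply Iv_0. intros; apply Hp; auto.
    + apply Rle_trans with (RInt (fun u => eps * tansec u) 0 t).
      apply RInt_le; auto. apply ex_RInt_C0'; auto. apply Iv_0.
      apply ex_RInt_C0'; auto. 2: apply Iv_0.
      intros u Hu. apply (cont_mult (fun _ => eps)). apply cont_const. apply tansec_C0; auto.
      intros; apply Hp; auto.
      rewrite RInt_ktansec; auto. rewrite secf_0. lra. apply Iv_0.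
  - assert (Hp : forall u, t < u < 0 -> eps * tansec u <= X u <= - eps * tansec u).
    { intros u Hu. assert (Hu' : Iv u) by (destruct Ht; split; lra).
      destruct (tansec_sign u Hu') as [_ Hs]. assert (Hs' := Hs (Rlt_le _ _ (proj2 Hu))).
      assert (Hb := Hbound u). rewrite Rabs_left in Htd by lra. rewrite Rabs_left in Hb by lra.
      specialize (Hb ltac:(lra)). apply Rabs_def2 in Hb. unfold X. split; nra. }
    rewrite <- (opp_RInt_swap (V:=R_CompleteNormedModule)).
    2: apply ex_RInt_C0'; auto; apply Iv_0.
    change (opp ?a) with (Ropp a).
    assert (Hl : eps * secf 0 - eps * secf t <= RInt X t 0).
    { rewrite <- RInt_ktansec; auto. 2: apply Iv_0.
      apply RInt_le; auto. lra. apply ex_RInt_C0'; auto. 2: apply Iv_0.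
      intros u Hu. apply (cont_mult (fun _ => eps)). apply cont_const. apply tansec_C0; auto.
      apply ex_RInt_C0'; auto. apply Iv_0. intros; apply Hp; auto. }
    assert (Hr : RInt X t 0 <= - eps * secf 0 - - eps * secf t).
    { rewrite <- RInt_ktansec; auto. 2: apply Iv_0.
      apply RInt_le; auto. lra. apply ex_RInt_C0'; auto. apply Iv_0.
      apply ex_RInt_C0'; auto. 2: apply Iv_0.
      intros u Hu. apply (cont_mult (fun _ => - eps)). apply cont_const. apply tansec_C0; auto.
      intros; apply Hp; auto. }
    rewrite secf_0 in Hl, Hr. split; lra.
Qed.

Lemma itan2_sec t : Iv t -> t <> 0 -> 1 / tan t ^ 2 * (secf t - 1) = cos t / (1 + cos t).
Proof.
  intros Ht Ht0. assert (Hs := Iv_sin_neq0 t Ht Ht0). assert (Hc := Iv_cos t Ht).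
  assert (Hsc := sin2_cos2 t). unfold Rsqr in Hsc.
  assert (Hc1 : cos t <> 1).
  { intro H1. rewrite H1 in Hsc. apply Hs. nra. }
  unfold tan, secf.
  replace (1 / (sin t / cos t) ^ 2 * (1 / cos t - 1)) with (cos t * (1 - cos t) / (sin t * sin t)) by (field; auto; lra).
  replace (sin t * sin t) with ((1 - cos t) * (1 + cos t)) by nra.
  field. split; lra.
Qed.

Definition itan2 := fun t => 1 / tan t ^ 2.

Lemma tan_neq0 t : Iv t -> t <> 0 -> tan t <> 0.
Proof.
  intros Ht Ht0. unfold tan. assert (Hs := Iv_sin_neq0 t Ht Ht0). assert (Hc := Iv_cos t Ht).
  unfold Rdiv. apply Rmult_integral_contrapositive. split; auto. apply Rinv_neq_0_compat. lra.
Qed.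

Lemma Good_itan2 : Good [Form (fun t => 1 / tan t ^ 2)] Qc O1.
Proof.
  apply Form_good. intros g [h [Hh Hg]].
  set (G := fun y => RInt (fun t => tansec t * h t) 0 y).
  assert (HG : Dcl G (fun t => tansec t * h t)).
  { apply Form_out. intros t Ht. apply cont_mult; [apply tansec_C0|apply Hh]; auto. auto. }
  assert (HgC : C0 g).
  { intros t Ht. apply (cont_ext_Iv G); auto. intros; symmetry; auto.
    destruct HG as [HD _]. eapply cont_of_derive. apply HD; auto. }
  set (Rm := fun t => if Req_EM_T t 0 then 0 else 1 / tan t ^ 2 * (g t - h 0 * (secf t - 1))).
  set (E := fun t => h 0 * (cos t / (1 + cos t)) + Rm t).
  assert (HE : forall t, Iv t -> t <> 0 -> E t = 1 / tan t ^ 2 * g t).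
  { intros t Ht Ht0. unfold E, Rm. destruct (Req_EM_T t 0); [contradiction|].
    rewrite <- (itan2_sec t) by auto. ring. }
  assert (HRm : C0 Rm).
  { intros t Ht. destruct (Req_EM_T t 0) as [->|Ht0].
    - apply continuity_pt_filterlim. intros eps Heps.
      destruct (rem_est h Hh (eps / 2)) as [del [Hdel Hd]]. lra.
      exists (Rmin del (PI / 2)). split. apply Rmin_pos; auto. assert (H := PI_RGT_0). lra.
      intros u [[_ Hu0] Hu]. simpl in Hu. unfold R_dist in Hu. rewrite Rminus_0_r in Hu.
      assert (Hu0' : u <> 0) by auto.
      assert (Hu1 : Rabs u < del) by (apply Rlt_le_trans with (1 := Hu); apply Rmin_l).
      assert (Hu2 : Rabs u < PI / 2) by (apply Rlt_le_trans with (1 := Hu); apply Rmin_r).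
      assert (HuI : Iv u) by (apply Rabs_def2 in Hu2; split; lra).
      simpl. unfold R_dist, Rm. destruct (Req_EM_T u 0); [contradiction|].
      destruct (Req_EM_T 0 0) as [_|nn]; [|contradiction]. rewrite Rminus_0_r.
      specialize (Hd u HuI Hu1). rewrite <- Hg in Hd by auto.
      assert (Ht2 : 0 < 1 / tan u ^ 2).
      { assert (Htn := tan_neq0 u HuI Hu0'). unfold Rdiv. rewrite Rmult_1_l.
        apply Rinv_0_lt_compat. apply pow2_gt_0; auto. }
      rewrite Rabs_mult, (Rabs_pos_eq (1 / tan u ^ 2)) by lra.
      apply Rle_lt_trans with (1 / tan u ^ 2 * (eps / 2 * (secf u - 1))).
      apply Rmult_le_compat_l; lra.
      replace (1 / tan u ^ 2 * (eps / 2 * (secf u - 1))) with (eps / 2 * (1 / tan u ^ 2 * (secf u - 1))) by ring.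
      rewrite itan2_sec by auto. assert (Hc := Iv_cos u HuI).
      assert (cos u / (1 + cos u) < 1).
      { apply Rmult_lt_reg_r with (1 + cos u). lra. unfold Rdiv. rewrite Rmult_assoc, Rinv_l by lra. lra. }
      assert (0 < cos u / (1 + cos u)) by (apply Rdiv_lt_0_compat; lra).
      nra.
    - apply (cont_loc_eq (fun u => 1 / tan u ^ 2 * (g u - h 0 * (secf u - 1))) _ t (Rmin (Rabs t) 1)).
      + apply Rmin_pos. apply Rabs_pos_lt; auto. lra.
      + intros u Hu. unfold Rm. destruct (Req_EM_T u 0) as [->|]; auto.
        rewrite Rminus_0_l, Rabs_Ropp in Hu. assert (Hm := Rmin_l (Rabs t) 1). lra.
      + apply cont_mult.
        * unfold Rdiv. apply (cont_mult (fun _ => 1)). apply cont_const. apply cont_inv.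
          apply (cont_mult tan (fun u => tan u ^ 1)). apply cont_tan; auto.
          apply (cont_mult tan (fun _ => 1)). apply cont_tan; auto. apply cont_const.
          apply pow_nonzero, tan_neq0; auto.
        * apply cont_minus. apply HgC; auto. apply (cont_mult (fun _ => h 0)). apply cont_const.
          apply cont_minus. unfold secf. apply (cont_mult (fun _ => 1)). apply cont_const.
          apply cont_inv. apply cont_cos. apply Rgt_not_eq, Iv_cos; auto. apply cont_const. }
  assert (HEC : C0 E).
  { intros t Ht. unfold E. apply cont_plus; [|apply HRm; auto].
    apply (cont_mult (fun _ => h 0)). apply cont_const. unfold Rdiv.
    apply cont_mult. apply cont_cos. apply cont_inv. apply cont_plus. apply cont_const. apply cont_cos.
    assert (Hc := Iv_cos t Ht). lra. }
  exists E. split; auto. split; auto. exists E. apply Form_out; auto.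
Qed.


Lemma Good_rep1 m : Good (repeat (Form cotf) m) O1 O1.
Proof.
  induction m. apply Good_nil. change (repeat (Form cotf) (S m)) with ([Form cotf] ++ repeat (Form cotf) m).
  eapply Good_app. apply Good_cot1. auto.
Qed.

Lemma Good_rep2 m : Good (repeat (Form cotf) m) O2 O2.
Proof.
  induction m. apply Good_nil. change (repeat (Form cotf) (S m)) with ([Form cotf] ++ repeat (Form cotf) m).
  eapply Good_app. apply Good_cot2. auto.
Qed.

Lemma C0_tan : C0 tan.
Proof. intros t Ht. apply cont_tan; auto. Qed.

Lemma C0_secf : C0 secf.
Proof.
  intros t Ht. unfold secf. apply (cont_mult (fun _ => 1)). apply cont_const.
  apply cont_inv. apply cont_cos. apply Rgt_not_eq, Iv_cos; auto.
Qed.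

Lemma C0_dsec : C0 dsec.
Proof. intros t Ht. unfold dsec. apply cont_mult. apply C0_secf; auto. apply C0_tan; auto. Qed.

Lemma C0_sintan : C0 (fun t => sin t * tan t).
Proof. intros t Ht. apply cont_mult. apply cont_sin. apply C0_tan; auto. Qed.

Lemma O2_C0 g : O2 g -> C0 g.
Proof. intros. apply O1_C0, O2_O1; auto. Qed.

Lemma Good_lam l s : forall cw, In cw (lam l s) -> Good (snd cw) C0 C0.
Proof.
  assert (T0 : tan 0 = 0) by apply tan_0.
  destruct l; unfold lam.
  - intros cw [<-|[<-|[]]]; cbn [snd].
    + eapply Good_weak. eapply Good_app. apply Good_rep2. apply Good_formcont. apply C0_tan. auto.
      auto. apply O2_C0.
    + eapply Good_weak. eapply Good_app. apply Good_rep2.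
      change [Form cscf; Form dsec] with ([Form cscf] ++ [Form dsec]).
      eapply Good_app. apply Good_csc2. apply Good_formcont. apply C0_dsec. unfold dsec. rewrite T0; ring.
      auto. apply O2_C0.
  - intros cw [<-|[<-|[]]]; cbn [snd].
    + change (Mul cscf :: Fs s ++ [Form (fun t => sin t * tan t)]) with
        ([Mul cscf] ++ (Fs s ++ [Form (fun t => sin t * tan t)])).
      eapply Good_app. apply Good_mulcsc. eapply Good_app. apply Good_rep2.
      apply Good_formcont. apply C0_sintan. rewrite T0; ring.
    + change (Mul cscf :: Fs s ++ [Form (fun _ => 1); Form dsec]) with
        ([Mul cscf] ++ (Fs s ++ ([Form (fun _ => 1)] ++ [Form dsec]))).
      eapply Good_app. apply Good_mulcsc. eapply Good_app. apply Good_rep2.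
      eapply Good_app. apply (Good_weak _ O1 O2 O2 O2). apply Good_form1. apply O2_O1. auto.
      apply Good_formcont. apply C0_dsec. unfold dsec. rewrite T0; ring.
  - destruct s as [|[|s]].
    + intros cw [<-|[]]; cbn [snd].
      change (Mul sin :: Fs (0 - 1) ++ [Form (fun t => 1 / tan t ^ 2); Form tansec]) with
        ([Mul sin] ++ (Fs (0 - 1) ++ ([Form (fun t => 1 / tan t ^ 2)] ++ [Form tansec]))).
      eapply Good_app. apply Good_mulC0. intros t Ht; apply cont_sin.
      eapply Good_app. apply (Good_weak _ O1 O1 O1 C0). apply Good_rep1. auto. apply O1_C0.
      eapply Good_app. apply Good_itan2. apply Good_tansec_Q.
    + intros cw [<-|[]]; cbn [snd].
      change [Mul cos; Form tansec] with ([Mul cos] ++ [Form tansec]).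
      eapply Good_app. apply Good_mulC0. intros t Ht; apply cont_cos.
      eapply Good_weak. apply Good_formcont. apply tansec_C0. unfold tansec. rewrite T0; ring.
      auto. apply O2_C0.
    + intros cw [<-|[]]; cbn [snd].
      change (Mul sin :: Fs (S (S s) - 1) ++ [Form (fun t => 1 / tan t ^ 2); Form tansec]) with
        ([Mul sin] ++ (Fs (S (S s) - 1) ++ ([Form (fun t => 1 / tan t ^ 2)] ++ [Form tansec]))).
      eapply Good_app. apply Good_mulC0. intros t Ht; apply cont_sin.
      eapply Good_app. apply (Good_weak _ O1 O1 O1 C0). apply Good_rep1. auto. apply O1_C0.
      eapply Good_app. apply Good_itan2. apply Good_tansec_Q.
Qed.


Definition lin_op (L : lin) (g : R -> R) (y : R) : R :=
  fold_right (fun cw acc => fst cw * op (snd cw) g y + acc) 0 L.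

Lemma RInt_unique_R (f : R -> R) a b (l : R) : is_RInt f a b l -> RInt f a b = l.
Proof. apply (is_RInt_unique (V:=R_CompleteNormedModule)). Qed.

Lemma RInt_correct_R (f : R -> R) a b : ex_RInt f a b -> is_RInt f a b (RInt f a b).
Proof. apply (RInt_correct (V:=R_CompleteNormedModule)). Qed.

Lemma RInt_ext_Iv (f g : R -> R) y : Iv y -> (forall t, Iv t -> t <> 0 -> f t = g t) ->
  RInt f 0 y = RInt g 0 y.
Proof. intros Hy E. apply RInt_ext. intros x Hx. destruct (Iv_between_open y x Hy Hx). auto. Qed.

Lemma op_Fs_sin m h y : polyb h -> Iv y ->
  op (repeat (Form cotf) m) (fun t => sin t * Phi h t) y = sin y * Phi (fun k => h k / (2 * INR k + 1) ^ m) y.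
Proof.
  revert h y. induction m; intros h y Hh Hy.
  - cbn [repeat op]. f_equal. apply Phi_ext. intros k. simpl. field.
  - cbn [repeat op].
    set (h' := fun k => h k / (2 * INR k + 1) ^ m).
    assert (Hh' : polyb h').
    { apply polyb_div; auto. intros k. right. rewrite Rabs_pos_eq. apply pow_R1_Rle.
      assert (H := pos_INR k). lra. apply pow_le. assert (H := pos_INR k). lra. }
    rewrite (RInt_ext_Iv _ (fun t => cos t * Phi h' t)); auto.
    2: { intros t Ht Ht0. rewrite IHm; auto. unfold cotf. fold h'. field. apply Iv_sin_neq0; auto. }
    rewrite (RInt_unique_R _ _ _ _ (int_cos h' y Hh' Hy)). f_equal. apply Phi_ext.
    intros k. unfold h'. simpl. assert (H := pos_INR k).
    assert ((2 * INR k + 1) ^ m <> 0) by (apply pow_nonzero; lra). field. split; lra.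
Qed.

Lemma op_Fs_even m h y : polyb h -> h 0%nat = 0 -> Iv y ->
  op (repeat (Form cotf) m) (Phi h) y = Phi (fun k => h k / (2 * INR k) ^ m) y.
Proof.
  revert h y. induction m; intros h y Hh H0 Hy.
  - cbn [repeat op]. apply Phi_ext. intros k. simpl. field.
  - cbn [repeat op].
    set (h' := fun k => h k / (2 * INR k) ^ m).
    assert (Hh' : polyb h').
    { apply polyb_div; auto. intros [|k]. left; auto. right. rewrite Rabs_pos_eq. apply pow_R1_Rle.
      rewrite S_INR. assert (H := pos_INR k). lra. apply pow_le. rewrite S_INR. assert (H := pos_INR k). lra. }
    assert (H0' : h' 0%nat = 0) by (unfold h'; rewrite H0; unfold Rdiv; ring).
    rewrite (RInt_ext_Iv _ (fun t => cotf t * Phi h' t)); auto.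
    2: { intros t Ht Ht0. rewrite IHm; auto. }
    rewrite (RInt_unique_R _ _ _ _ (int_cot h' y Hh' H0' Hy)). apply Phi_ext.
    intros [|k]. unfold h'. rewrite H0. unfold Rdiv. ring.
    unfold h'. rewrite S_INR. simpl. assert (H := pos_INR k).
    assert ((2 * (INR k + 1)) ^ m <> 0) by (apply pow_nonzero; lra). field. split; lra.
Qed.

Lemma tansec_eq_dsec : tansec = dsec.
Proof. apply functional_extensionality. intros t. unfold tansec, dsec. ring. Qed.

Lemma int_dsec_val g y : polyb g -> Iv y ->
  RInt (fun t => dsec t * Phi g t) 0 y = sin y * tan y * Phi g y - cos y * Phi (psum g) y.
Proof. intros. apply RInt_unique_R, int_dsec; auto. Qed.

Lemma Dlem g k : shiftup (fun j => g j + psum g j) k - psum g k = psum g k / lval L2nm1 k.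
Proof.
  destruct k as [|j].
  - simpl. unfold Rdiv. ring.
  - unfold shiftup, lval. simpl psum. rewrite beta_S, S_INR. assert (H := pos_INR j).
    assert (Hb := beta_pos j). field. lra.
Qed.

Lemma cos_G1 g t : polyb g -> Iv t ->
  cos t * (sin t * tan t * Phi g t - cos t * Phi (psum g) t) = Phi (fun k => psum g k / lval L2nm1 k) t.
Proof.
  intros Hg Ht. assert (Hc := Iv_cos t Ht).
  assert (Hsc := sin2_cos2 t). unfold Rsqr in Hsc.
  replace (cos t * (sin t * tan t * Phi g t - cos t * Phi (psum g) t)) with
    (sin t ^ 2 * (Phi g t + Phi (psum g) t) + (-1) * Phi (psum g) t).
  2: { unfold tan. apply Rminus_diag_uniq. match goal with |- ?L = 0 => replace L with (Phi (psum g) t * (sin t ^ 2 + cos t ^ 2 - 1)) by (field; lra) end. replace (sin t ^ 2 + cos t ^ 2) with 1 by (simpl; lra). ring. }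
  rewrite Phi_add, sin2_Phi, Phi_lin; auto; try polyb_tac.
  apply Phi_ext. intros k. rewrite <- Dlem. ring.
Qed.


Lemma ex_RInt_Iv (f : R -> R) y : C0 f -> Iv y -> ex_RInt f 0 y.
Proof. intros. apply ex_RInt_C0'; auto. apply Iv_0. Qed.

Lemma C0_Phi g : polyb g -> C0 (Phi g).
Proof. intros Hg t Ht. apply Phi_cont; auto. Qed.

Lemma T_L2n g t : polyb g -> Iv t ->
  -1 * op [Form cscf; Form dsec] (Phi g) t + op [Form tan] (Phi g) t = Phi (fun k => psum g k / (2 * INR k)) t.
Proof.
  intros Hg Ht. cbn [op].
  set (G := psum g). assert (HG : polyb G) by polyb_tac.
  rewrite (RInt_ext_Iv (fun u => cscf u * RInt (fun v => dsec v * Phi g v) 0 u)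
             (fun u => cscf u * (sin u * tan u * Phi g u - cos u * Phi G u))); auto.
  2: { intros u Hu Hu0. rewrite int_dsec_val; auto. }
  assert (H1 := RInt_correct_R _ _ _ (ex_RInt_Iv (fun u => tan u * Phi g u) t
     (fun u Hu => cont_mult _ _ _ (C0_tan u Hu) (Phi_cont g u Hg Hu)) Ht)).
  assert (H2 := int_cot G t HG eq_refl Ht).
  assert (H3 := is_RInt_minus _ _ _ _ _ _ H1 H2).
  rewrite (RInt_unique_R (fun u => cscf u * (sin u * tan u * Phi g u - cos u * Phi G u)) 0 t
     (minus (RInt (fun u => tan u * Phi g u) 0 t) (Phi (fun k => G k / (2 * INR k)) t))).
  - change (minus ?a ?b) with (a - b). ring.
  - apply (is_RInt_ext _ _ _ _ _ ) with (2 := H3). intros u Hu.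
    destruct (Iv_between_open t u Ht Hu) as [HuI Hu0].
    change (minus ?a ?b) with (a - b). unfold cscf, cotf, tan. 
    assert (Hs := Iv_sin_neq0 u HuI Hu0). assert (Hc := Iv_cos u HuI). reqR. field. split; lra.
Qed.

Lemma lam_L2n s g y : (1 <= s)%nat -> polyb g -> Iv y ->
  lin_op (lam L2n s) (Phi g) y = Phi (fun k => psum g k / lval L2n k ^ s) y.
Proof.
  intros Hs Hg Hy. unfold lam, lin_op. cbn [fold_right fst snd].
  rewrite !op_app. unfold Fs.
  destruct (Good_rep2 (s - 1)) as [_ [Lin [Resp _]]].
  assert (O2a : O2 (op [Form tan] (Phi g))).
  { destruct (Good_formcont tan C0_tan tan_0) as [M _]. apply M. apply C0_Phi; auto. }
  assert (O2b : O2 (op [Form cscf; Form dsec] (Phi g))).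
  { assert (Gd : Good ([Form cscf] ++ [Form dsec]) C0 O2).
    { eapply Good_app. apply Good_csc2. apply Good_formcont. apply C0_dsec. unfold dsec. rewrite tan_0; ring. }
    destruct Gd as [M _]. apply M. apply C0_Phi; auto. }
  rewrite Rmult_1_l, Rplus_0_r, Rplus_comm, <- Lin; auto.
  rewrite (Resp _ (Phi (fun k => psum g k / (2 * INR k)))); auto.
  2: { intros t Ht. apply T_L2n; auto. }
  rewrite op_Fs_even; auto.
  - apply Phi_ext. intros [|k]. simpl. unfold Rdiv. ring.
    unfold lval. rewrite S_INR. assert (H := pos_INR k).
    destruct s as [|s]. lia. replace (S s - 1)%nat with s by lia. simpl.
    assert ((2 * (INR k + 1)) ^ s <> 0) by (apply pow_nonzero; lra). field. split; lra.
  - apply polyb_div; polyb_tac. intros [|k]. left; simpl; unfold Rdiv; ring. right.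
    rewrite S_INR, Rabs_pos_eq; assert (H := pos_INR k); lra.
  - simpl. unfold Rdiv. ring.
Qed.

Lemma T_L2n1 g t : polyb g -> Iv t ->
  -1 * op [Form (fun _ => 1); Form dsec] (Phi g) t + op [Form (fun t => sin t * tan t)] (Phi g) t
  = sin t * Phi (fun k => psum g k / (2 * INR k + 1)) t.
Proof.
  intros Hg Ht. cbn [op].
  set (G := psum g). assert (HG : polyb G) by polyb_tac.
  rewrite (RInt_ext_Iv (fun u => 1 * RInt (fun v => dsec v * Phi g v) 0 u)
             (fun u => sin u * tan u * Phi g u - cos u * Phi G u)); auto.
  2: { intros u Hu Hu0. rewrite int_dsec_val; auto. unfold G. ring. }
  assert (H1 := RInt_correct_R _ _ _ (ex_RInt_Iv (fun u => sin u * tan u * Phi g u) t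
     (fun u Hu => cont_mult _ _ _ (C0_sintan u Hu) (Phi_cont g u Hg Hu)) Ht)).
  assert (H2 := int_cos G t HG Ht).
  assert (H3 := is_RInt_minus _ _ _ _ _ _ H1 H2).
  rewrite (RInt_unique_R (fun u => sin u * tan u * Phi g u - cos u * Phi G u) 0 t
     (minus (RInt (fun u => sin u * tan u * Phi g u) 0 t) (sin t * Phi (fun k => G k / (2 * INR k + 1)) t))).
  - change (minus ?a ?b) with (a - b). ring.
  - apply (is_RInt_ext _ _ _ _ _ ) with (2 := H3). intros u Hu. reflexivity.
Qed.

Lemma lam_L2n1 s g y : (1 <= s)%nat -> polyb g -> Iv y ->
  lin_op (lam L2n1 s) (Phi g) y = Phi (fun k => psum g k / lval L2n1 k ^ s) y.
Proof.
  intros Hs Hg Hy. unfold lam, lin_op. cbn [fold_right fst snd].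
  change (Mul cscf :: Fs s ++ [Form (fun t => sin t * tan t)]) with
        ([Mul cscf] ++ (Fs s ++ [Form (fun t => sin t * tan t)])).
  change (Mul cscf :: Fs s ++ [Form (fun _ => 1); Form dsec]) with
        ([Mul cscf] ++ (Fs s ++ [Form (fun _ => 1); Form dsec])).
  rewrite !op_app. cbn [op]. rewrite !op_app. unfold Fs.
  destruct (Good_rep2 (s - 1)) as [_ [Lin [Resp _]]].
  assert (O2a : O2 (op [Form (fun t => sin t * tan t)] (Phi g))).
  { destruct (Good_formcont _ C0_sintan) as [M _]. rewrite tan_0; ring. apply M. apply C0_Phi; auto. }
  assert (O2b : O2 (op [Form (fun _ => 1); Form dsec] (Phi g))).
  { assert (Gd : Good ([Form (fun _ => 1)] ++ [Form dsec]) C0 O2).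
    { eapply Good_app. apply (Good_weak _ O1 O2 O2 O2). apply Good_form1. apply O2_O1. auto.
      apply Good_formcont. apply C0_dsec. unfold dsec. rewrite tan_0; ring. }
    destruct Gd as [M _]. apply M. apply C0_Phi; auto. }
  replace (1 * (cscf y * op (repeat (Form cotf) (s - 1)) (op [Form (fun t => sin t * tan t)] (Phi g)) y) +
    (-1 * (cscf y * op (repeat (Form cotf) (s - 1)) (op [Form (fun _ => 1); Form dsec] (Phi g)) y) + 0))
    with (cscf y * (-1 * op (repeat (Form cotf) (s - 1)) (op [Form (fun _ => 1); Form dsec] (Phi g)) y
         + op (repeat (Form cotf) (s - 1)) (op [Form (fun t => sin t * tan t)] (Phi g)) y)) by ring.
  rewrite <- Lin; auto.
  rewrite (Resp _ (fun t => sin t * Phi (fun k => psum g k / (2 * INR k + 1)) t)); auto.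
  2: { intros t Ht. apply T_L2n1; auto. }
  rewrite op_Fs_sin; auto.
  2: { apply polyb_div; polyb_tac. intros k. right. rewrite Rabs_pos_eq; assert (H := pos_INR k); lra. }
  destruct (Req_EM_T y 0) as [->|Hy0].
  - rewrite sin_0, !Phi_0. simpl. unfold Rdiv. ring.
  - unfold cscf. rewrite <- Rmult_assoc. replace (1 / sin y * sin y) with 1 by (field; apply Iv_sin_neq0; auto).
    rewrite Rmult_1_l. apply Phi_ext. intros k. unfold lval. assert (H := pos_INR k).
    destruct s as [|s]. lia. replace (S s - 1)%nat with s by lia. simpl.
    assert ((2 * INR k + 1) ^ s <> 0) by (apply pow_nonzero; lra). field. split; lra.
Qed.

Lemma lam_L2nm1_1 g y : polyb g -> Iv y ->
  lin_op (lam L2nm1 1) (Phi g) y = Phi (fun k => psum g k / lval L2nm1 k ^ 1) y.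
Proof.
  intros Hg Hy. unfold lam, lin_op. cbn [fold_right fst snd op].
  rewrite tansec_eq_dsec, int_dsec_val, cos_G1; auto.
  rewrite Rmult_1_l, Rplus_0_r. apply Phi_ext. intros k. rewrite pow_1. auto.
Qed.

Lemma T_L2nm1 g t : polyb g -> Iv t ->
  op [Form (fun t => 1 / tan t ^ 2); Form tansec] (Phi g) t =
  sin t * Phi (fun k => shiftdown (fun k => psum g k / lval L2nm1 k) k / (2 * INR k + 1)) t.
Proof.
  intros Hg Ht. cbn [op]. rewrite tansec_eq_dsec.
  set (D := fun k => psum g k / lval L2nm1 k).
  assert (HD : polyb D).
  { apply polyb_div; polyb_tac. intros [|k]. left; simpl; unfold Rdiv; ring. right.
    unfold lval. rewrite S_INR, Rabs_pos_eq; assert (H := pos_INR k); lra. }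
  assert (HD0 : D 0%nat = 0) by (unfold D; simpl; unfold Rdiv; ring).
  assert (HDm : polyb (shiftdown D)) by polyb_tac.
  rewrite (RInt_ext_Iv _ (fun u => cos u * Phi (shiftdown D) u)); auto.
  - apply RInt_unique_R, int_cos; auto.
  - intros u Hu Hu0. rewrite int_dsec_val; auto.
    assert (Hc := Iv_cos u Hu). assert (Hs := Iv_sin_neq0 u Hu Hu0).
    assert (E1 : sin u * tan u * Phi g u - cos u * Phi (psum g) u = Phi D u / cos u).
    { unfold D. rewrite <- (cos_G1 g u) by auto. field. lra. }
    rewrite E1.
    assert (E2 : Phi D u = sin u ^ 2 * Phi (shiftdown D) u).
    { rewrite sin2_Phi. apply Phi_ext. intros k. rewrite shiftup_shiftdown; auto. }
    rewrite E2. unfold tan. field. split; lra.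
Qed.

Lemma lam_L2nm1_SS s g y : polyb g -> Iv y ->
  lin_op (lam L2nm1 (S (S s))) (Phi g) y = Phi (fun k => psum g k / lval L2nm1 k ^ (S (S s))) y.
Proof.
  intros Hg Hy. unfold lam, lin_op. cbn [fold_right fst snd].
  change (Mul sin :: Fs (S (S s) - 1) ++ [Form (fun t => 1 / tan t ^ 2); Form tansec]) with
    ([Mul sin] ++ (Fs (S (S s) - 1) ++ [Form (fun t => 1 / tan t ^ 2); Form tansec])).
  rewrite !op_app. cbn [op]. rewrite !op_app. unfold Fs.
  replace (S (S s) - 1 - 1)%nat with s by lia.
  set (D := fun k => psum g k / lval L2nm1 k).
  assert (HD : polyb D).
  { apply polyb_div; polyb_tac. intros [|k]. left; simpl; unfold Rdiv; ring. right.
    unfold lval. rewrite S_INR, Rabs_pos_eq; assert (H := pos_INR k); lra. }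
  assert (HDm : polyb (fun k => shiftdown D k / (2 * INR k + 1))).
  { apply polyb_div; polyb_tac. intros k. right. rewrite Rabs_pos_eq; assert (H := pos_INR k); lra. }
  destruct (Good_rep1 s) as [_ [_ [Resp _]]].
  rewrite (Resp _ (fun t => sin t * Phi (fun k => shiftdown D k / (2 * INR k + 1)) t)); auto.
  2: { intros t Ht. apply T_L2nm1; auto. }
  rewrite op_Fs_sin; auto.
  rewrite Rmult_1_l, Rplus_0_r, <- Rmult_assoc.
  replace (sin y * sin y) with (sin y ^ 2) by ring. rewrite sin2_Phi.
  apply Phi_ext. intros [|k].
  - simpl. unfold Rdiv. ring.
  - unfold shiftup, shiftdown, D, lval. rewrite !S_INR. simpl psum.
    assert (H := pos_INR k). assert (Hb := beta_pos k). assert (Hb' := beta_pos (S k)).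
    replace (2 * (INR k + 1) - 1) with (2 * INR k + 1) by ring.
    assert ((2 * INR k + 1) ^ s <> 0) by (apply pow_nonzero; lra).
    simpl. field. repeat split; lra.
Qed.

Lemma lam_value l s g y : (1 <= s)%nat -> polyb g -> Iv y ->
  lin_op (lam l s) (Phi g) y = Phi (fun k => psum g k / lval l k ^ s) y.
Proof.
  intros Hs Hg Hy. destruct l.
  - apply lam_L2n; auto.
  - apply lam_L2n1; auto.
  - destruct s as [|[|s]]. lia. apply lam_L2nm1_1; auto. apply lam_L2nm1_SS; auto.
Qed.

Lemma polyb_next l s g : polyb g -> polyb (fun k => psum g k / lval l k ^ s).
Proof.
  intros Hg. apply polyb_div; polyb_tac. intros [|k]. left; simpl; unfold Rdiv; ring. right.
  rewrite <- RPow_abs. apply pow_R1_Rle. unfold lval. destruct l; rewrite S_INR;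
  assert (H := pos_INR k); rewrite Rabs_pos_eq; lra.
Qed.


Definition delta (n : nat) : nat -> R := fun k => if Nat.eqb k n then 1 else 0.

Fixpoint cf (n : nat) (ks : list (Kind * nat)) : nat -> R :=
  match ks with
  | [] => delta n
  | p :: ks' => fun k => psum (cf n ks') k / lval (fst p) k ^ (snd p)
  end.

Lemma polyb_cf n ks : polyb (cf n ks).
Proof. induction ks; simpl. apply polyb_delta. apply polyb_next; auto. Qed.

Lemma psum_zero (g : nat -> R) k : (forall j, (j < k)%nat -> g j = 0) -> psum g k = 0.
Proof.
  induction k; intros H; simpl; auto. rewrite IHk, H; auto. ring.
Qed.

Lemma cf_zero n ks j : (j < n)%nat -> cf n ks j = 0.
Proof.
  revert j. induction ks; intros j Hj; simpl.
  - unfold delta. destruct (Nat.eqb_spec j n); auto. lia.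
  - rewrite psum_zero. unfold Rdiv; ring. intros i Hi. apply IHks. lia.
Qed.

Lemma psum_delta n k : psum (delta n) k = if Nat.ltb n k then 1 else 0.
Proof.
  induction k; simpl; auto. rewrite IHk. unfold delta.
  destruct (Nat.ltb_spec n k); destruct (Nat.eqb_spec k n); destruct (Nat.ltb_spec n (S k)); try lia; ring.
Qed.

Lemma sb_psum f n N : sum_between f n N = psum (fun m => if Nat.ltb n m then f m else 0) N.
Proof. induction N; simpl; auto. rewrite IHN. auto. Qed.

Lemma psum_ext f g N : (forall k, (k < N)%nat -> f k = g k) -> psum f N = psum g N.
Proof. induction N; intros H; simpl; auto. rewrite IHN, H; auto. Qed.

Lemma msum_tail n ks k : (n < k)%nat ->
  msum (map (fun p => fun m => 1 / lval (fst p) m ^ (snd p)) ks) n k = psum (cf n ks) k.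
Proof.
  revert k. induction ks as [|q ks IH]; intros k Hk; simpl.
  - rewrite psum_delta. destruct (Nat.ltb_spec n k); auto; lia.
  - rewrite sb_psum. apply psum_ext. intros m Hm. destruct (Nat.ltb_spec n m).
    + rewrite IH; auto. unfold Rdiv. ring.
    + rewrite psum_zero. unfold Rdiv; ring. intros i Hi. apply cf_zero. lia.
Qed.

Lemma lhs_eq x p ks n N :
  lhs_partial x (p :: ks) n N = psum (fun k => cf n (p :: ks) k * a_coef k x) N.
Proof.
  unfold lhs_partial, weights. destruct p as [k1 s1]. simpl msum. rewrite sb_psum.
  apply psum_ext. intros m Hm. destruct (Nat.ltb_spec n m).
  - rewrite msum_tail; auto. simpl. unfold Rdiv. ring.
  - simpl. rewrite psum_zero. unfold Rdiv; ring. intros i Hi. apply cf_zero. lia.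
Qed.

Lemma psum_sum_n f N : psum f (S N) = sum_n f N.
Proof.
  induction N. simpl. rewrite sum_O. ring.
  rewrite sum_Sn. change (psum f (S (S N))) with (psum f (S N) + f (S N)). rewrite IHN. reflexivity.
Qed.

Lemma lhs_limit c y : polyb c -> Iv y ->
  is_lim_seq (fun N => psum (fun k => c k * a_coef k (sin y)) N) (Phi c y).
Proof.
  intros Hc Hy. apply is_lim_seq_incr_1.
  apply (is_lim_seq_ext (sum_n (fun k => c k * a_coef k (sin y)))).
  { intros N. rewrite psum_sum_n. auto. }
  assert (H := Series_correct _ (Phi_ex c y Hc Hy)).
  unfold Phi, PSeries.
  assert (E : forall k, c k * a_coef k (sin y) = scal (pow_n (sin y ^ 2) k) (c k * beta k)).
  { intros k. rewrite a_coef_beta. change (scal ?a ?b) with (mult a b). change (mult ?a ?b) with (Rmult a b). rewrite (pow_n_pow (sin y ^ 2) k). ring. }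
  apply (is_lim_seq_ext (sum_n (fun k => scal (pow_n (sin y ^ 2) k) (c k * beta k)))).
  { intros N. apply sum_n_ext. intros; symmetry; auto. }
  unfold is_lim_seq. change (Rbar_locally (Finite ?l)) with (locally l).
  rewrite (Series_ext _ (fun k => scal (pow_n (sin y ^ 2) k) (c k * beta k))). exact H.
  intros k. change (scal ?a ?b) with (mult a b). change (mult ?a ?b) with (Rmult a b). rewrite (pow_n_pow (sin y ^ 2) k). ring.
Qed.


Lemma Phi_delta n t : Iv t -> Phi (delta n) t = a_coef n (sin t).
Proof.
  intros Ht. unfold Phi. rewrite (PSeries_decr_n _ n).
  2: { apply Phi_ex; auto. apply polyb_delta. }
  rewrite (PSeries_ext _ (fun _ => 0)), PSeries_const_0.
  2: { intros k. unfold PS_decr_n, delta. destruct (Nat.eqb_spec (S n + k) n). lia. ring. }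
  rewrite a_coef_beta. destruct n as [|m].
  - simpl. unfold delta. simpl. ring.
  - simpl sum_f_R0. rewrite sum_eq_R0.
    + unfold delta. rewrite Nat.eqb_refl. rewrite Rplus_0_l, Rmult_0_r, Rplus_0_r, Rmult_1_l. change (sin t * (sin t * 1)) with (sin t ^ 2). reflexivity.
    + intros k Hk. unfold delta. destruct (Nat.eqb_spec k (S m)). lia. ring.
Qed.

Definition lin_tail (A : lin) (M : letter) (y : R) : R :=
  fold_right (fun cw acc => fst cw * iint (snd cw ++ [M]) y + acc) 0 A.

Lemma lin_iint_T A M y : lin_iint (Defs.comp A [(1, [M])]) y = lin_tail A M y.
Proof.
  induction A as [|a A IH]; simpl; auto. unfold Defs.comp in *. simpl in *. rewrite IH. ring.
Qed.

Lemma lin_tail_app A1 A2 M y : lin_tail (A1 ++ A2) M y = lin_tail A1 M y + lin_tail A2 M y.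
Proof. induction A1; simpl; auto. ring. rewrite IHA1. ring. Qed.

Lemma op_zero w : Good w C0 C0 -> forall y, Iv y -> op w (fun _ => 0) y = 0.
Proof.
  intros [_ [Lin [Resp _]]] y Hy.
  assert (Hc : C0 (fun _ => 0)) by (intros t _; apply cont_const).
  assert (E1 := Lin _ _ (-1) Hc Hc y Hy).
  rewrite (Resp _ (fun _ => 0)) in E1; auto. lra. intros; ring.
Qed.

Lemma lin_tail_C0 B M : (forall cw, In cw B -> C0 (iint (snd cw ++ [M]))) -> C0 (lin_tail B M).
Proof.
  induction B as [|b B IH]; intros HB t Ht.
  - apply (cont_ext_Iv (fun _ => 0)); auto. apply cont_const.
  - change (continuous (fun y => fst b * iint (snd b ++ [M]) y + lin_tail B M y) t).
    apply cont_plus. apply (cont_mult (fun _ => fst b)). apply cont_const. apply HB; simpl; auto.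
    apply IH; auto. intros; apply HB; simpl; auto.
Qed.

Definition lin_tail' (B : lin) (w : word) (M : letter) (y : R) :=
  fold_right (fun cw acc => fst cw * op w (iint (snd cw ++ [M])) y + acc) 0 B.

Lemma op_lin_tail w B M y : Good w C0 C0 -> (forall cw, In cw B -> C0 (iint (snd cw ++ [M]))) -> Iv y ->
  lin_tail' B w M y = op w (lin_tail B M) y.
Proof.
  intros Gw. induction B as [|b B IH]; intros HB Hy; simpl.
  - change (lin_tail [] M) with (fun _ : R => 0). rewrite (op_zero w Gw y Hy). auto.
  - destruct Gw as [Map [Lin [Resp Sub]]].
    change (lin_tail (b :: B) M) with (fun t => fst b * iint (snd b ++ [M]) t + lin_tail B M t).
    rewrite Lin; auto. rewrite IH; auto. intros; apply HB; simpl; auto.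
    apply HB; simpl; auto. apply lin_tail_C0. intros; apply HB; simpl; auto.
Qed.

Lemma map_prefix a B M y :
  lin_tail (map (fun cw' => (fst a * fst cw', snd a ++ snd cw')) B) M y = fst a * lin_tail' B (snd a) M y.
Proof.
  induction B as [|b B IH]; simpl. ring. rewrite IH, <- app_assoc, iint_app. ring.
Qed.

Lemma lin_tail_comp A B M y : (forall cw, In cw A -> Good (snd cw) C0 C0) ->
  (forall cw, In cw B -> C0 (iint (snd cw ++ [M]))) -> Iv y ->
  lin_tail (Defs.comp A B) M y = lin_op A (lin_tail B M) y.
Proof.
  intros HA HB Hy. induction A as [|a A IH]; simpl; auto.
  change (Defs.comp (a :: A) B) with (map (fun cw' => (fst a * fst cw', snd a ++ snd cw')) B ++ comp A B).
  rewrite lin_tail_app, map_prefix, IH, op_lin_tail; auto.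
  apply HA; simpl; auto. intros; apply HA; simpl; auto.
Qed.

Lemma lin_op_resp A g1 g2 y : (forall cw, In cw A -> Good (snd cw) C0 C0) ->
  (forall t, Iv t -> g1 t = g2 t) -> Iv y -> lin_op A g1 y = lin_op A g2 y.
Proof.
  intros HA E Hy. induction A as [|a A IH]; simpl; auto.
  destruct (HA a (or_introl eq_refl)) as [_ [_ [Resp _]]].
  rewrite (Resp g1 g2 E y Hy), IH; auto. intros; apply HA; simpl; auto.
Qed.

Lemma in_comp cw A B : In cw (Defs.comp A B) ->
  exists a b, In a A /\ In b B /\ cw = (fst a * fst b, snd a ++ snd b).
Proof.
  unfold Defs.comp. intros H. apply in_flat_map in H. destruct H as [a [Ha H]].
  apply in_map_iff in H. destruct H as [b [Hb Hb']]. exists a, b. auto.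
Qed.

Definition Ma_sin n := Mul (fun t => a_coef n (sin t)).
Definition Ma_x n := Mul (fun t => a_coef n t).

Lemma main_sin n ks : (forall p, In p ks -> (1 <= snd p)%nat) ->
  (forall cw, In cw (lam_word ks) -> C0 (iint (snd cw ++ [Ma_sin n]))) /\
  (forall y, Iv y -> lin_tail (lam_word ks) (Ma_sin n) y = Phi (cf n ks) y).
Proof.
  induction ks as [|[l s] ks IH]; intros Hs.
  - split.
    + intros cw [<-|[]]. simpl. intros t Ht. apply (cont_ext_Iv (Phi (delta n))); auto.
      intros u Hu. rewrite Phi_delta; auto. ring. apply Phi_cont; auto. apply polyb_delta.
    + intros y Hy. simpl. rewrite Phi_delta; auto. ring.
  - destruct IH as [IC IV]. intros; apply Hs; simpl; auto.
    assert (HA := Good_lam l s).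
    split.
    + intros cw Hcw. apply in_comp in Hcw. destruct Hcw as [a [b [Ha [Hb ->]]]]. simpl snd.
      assert (E : iint ((snd a ++ snd b) ++ [Ma_sin n]) = op (snd a) (iint (snd b ++ [Ma_sin n]))).
      { apply functional_extensionality. intros t. rewrite <- app_assoc, iint_app. auto. }
      rewrite E. destruct (HA a Ha) as [Map _]. apply Map. apply IC; auto.
    + intros y Hy. change (lam_word ((l, s) :: ks)) with (Defs.comp (lam l s) (lam_word ks)).
      rewrite lin_tail_comp; auto. rewrite (lin_op_resp _ _ (Phi (cf n ks))); auto.
      simpl cf. apply lam_value; auto. apply (Hs (l, s)); simpl; auto. apply polyb_cf.
Qed.

Lemma main_x n ks : (forall p, In p ks -> (1 <= snd p)%nat) ->
  forall cw, In cw (lam_word ks) -> forall x, -1 < x < 1 ->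
  iint (map subst_letter (snd cw) ++ [Ma_x n]) x = iint (snd cw ++ [Ma_sin n]) (asin x).
Proof.
  induction ks as [|[l s] ks IH]; intros Hs.
  - intros cw [<-|[]] x Hx. simpl. rewrite sin_asin; auto. lra.
  - assert (IH' := IH (fun p Hp => Hs p (or_intror Hp))).
    destruct (main_sin n ks (fun p Hp => Hs p (or_intror Hp))) as [IC _].
    intros cw Hcw x Hx. apply in_comp in Hcw. destruct Hcw as [a [b [Ha [Hb ->]]]]. simpl snd.
    rewrite map_app, <- !app_assoc, !iint_app.
    destruct (Good_lam l s a Ha) as [_ [_ [_ Sub]]]. apply Sub; auto.
    all: try (intros u Hu; apply IH'; auto).
Qed.

Lemma rhs_x_sin ks n x : (forall p, In p ks -> (1 <= snd p)%nat) -> -1 < x < 1 ->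
  rhs_x ks n x = rhs_sin ks n (asin x).
Proof.
  intros Hs Hx. unfold rhs_x, rhs_sin.
  change (Mul (fun t => a_coef n t)) with (Ma_x n). change (Mul (fun t => a_coef n (sin t))) with (Ma_sin n).
  rewrite !lin_iint_T. assert (HW := main_x n ks Hs).
  induction (lam_word ks) as [|a L IHL]; simpl; auto.
  rewrite IHL. rewrite HW; auto. simpl; auto. intros; apply HW; simpl; auto.
Qed.


Theorem theorem5p1 (ks : list (Kind * nat)) :
  ks <> [] ->
  (forall p, In p ks -> (1 <= snd p)%nat) ->
  (forall p, In p (tl ks) -> fst p <> L2nm1) ->
  (forall (y : R) (n : nat), - (PI / 2) < y < PI / 2 ->
     is_lim_seq (fun N => lhs_partial (sin y) ks n N) (Finite (rhs_sin ks n y))) /\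
  (forall (x : R) (n : nat), -1 < x < 1 ->
     is_lim_seq (fun N => lhs_partial x ks n N) (Finite (rhs_x ks n x))).
Proof.
  intros Hne Hs _.
  assert (P1 : forall (y : R) (n : nat), - (PI / 2) < y < PI / 2 ->
     is_lim_seq (fun N => lhs_partial (sin y) ks n N) (Finite (rhs_sin ks n y))).
  { intros y n Hy. destruct ks as [|p ks']. contradiction.
    apply (is_lim_seq_ext (fun N => psum (fun k => cf n (p :: ks') k * a_coef k (sin y)) N)).
    { intros N. rewrite lhs_eq. auto. }
    unfold rhs_sin. change (Mul (fun t => a_coef n (sin t))) with (Ma_sin n).
    rewrite lin_iint_T. destruct (main_sin n (p :: ks') Hs) as [_ HV]. rewrite HV; auto.
    apply lhs_limit; auto. apply polyb_cf. }
  split; auto.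
  intros x n Hx. rewrite rhs_x_sin; auto.
  assert (H := P1 (asin x) n (asin_bound_lt x Hx)). rewrite sin_asin in H by lra. exact H.
Qed.
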